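(* Let $K \subseteq \mathbb{R}$ be compact and let $\gamma: K \to \mathbb{H}$ be continuous. Then $\gamma \in C^1_{\mathbb{H}}(K)$ if and only if the Pansu difference quotients of $\gamma$ converge uniformly on $K$ to horizontal points, i.e. for every $a \in K$ there is a horizontal point $p_a \in \mathbb{R}^2 \times \{0\}$ such that $$\lim_{\substack{|b-a|\to 0\\ a,b\in K}} \left| \delta_{1/(b-a)}\left(\gamma(a)^{-1} * \gamma(b)\right) - p_a \right| = 0,$$ the limit being taken jointly over pairs $a \neq b$ in $K$ (that is, for every $\varepsilon>0$ there is $\delta>0$ such that the displayed quantity is $<\varepsilon$ for all $a,b\in K$ with $0<|b-a|<\delta$).
   Context: The Heisenberg group $\mathbb{H}$ is $\mathbb{R}^3$ with group law $(x,y,z)*(x',y',z') = (x+x',\,y+y',\,z+z'+2(yx'-xy'))$; the inverse is $(x,y,z)^{-1}=(-x,-y,-z)$. Dilations are $\delta_r(x,y,z) = (rx,ry,r^2 z)$ for $r \neq 0$. A point of $\mathbb{H}$ is horizontal if it lies in $\mathbb{R}^2\times\{0\}$. An absolutely continuous curve $\Gamma=(f,g,h):\mathbb{R}\to\mathbb{R}^3$ is horizontal if $h' = 2(f'g - fg')$ almost everywhere. $C^m(\mathbb{R})$ denotes the $m$-times continuously differentiable real functions $f$ with $\sup_{x\in\mathbb{R}}|f^{(m)}(x)|<\infty$, and $C^m(\mathbb{R},\mathbb{R}^3)$ the curves whose components lie in $C^m(\mathbb{R})$. For compact $K\subseteq\mathbb{R}$ and $\gamma:K\to\mathbb{H}$,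 one writes $\gamma \in C^m_{\mathbb{H}}(K)$ if there is a horizontal curve $\Gamma\in C^m(\mathbb{R},\mathbb{R}^3)$ with $\Gamma|_K=\gamma$. *)

(* Defs.v *)
From Stdlib Require Import Reals Rtopology.
From Coquelicot Require Import Coquelicot.
Open Scope R_scope.

Definition Hpt : Type := (R * R * R)%type.

Definition hmul (p q : Hpt) : Hpt :=
  let '(x, y, z) := p in let '(x', y', z') := q in
  (x + x', y + y', z + z' + 2 * (y * x' - x * y')).

Definition hinv (p : Hpt) : Hpt :=
  let '(x, y, z) := p in (- x, - y, - z).

Definition hdil (r : R) (p : Hpt) : Hpt :=
  let '(x, y, z) := p in (r * x, r * y, r * r * z).

Definition hsub (p q : Hpt) : Hpt :=
  let '(x, y, z) := p in let '(x', y', z') := q in (x - x', y - y', z - z').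

Definition enorm (p : Hpt) : R :=
  let '(x, y, z) := p in sqrt (x * x + y * y + z * z).

Definition horiz (v : R * R) : Hpt := (fst v, snd v, 0).

Definition null_set (N : R -> Prop) : Prop :=
  forall eps : R, 0 < eps ->
    exists a b : nat -> R,
      (forall n, a n <= b n) /\
      (forall t, N t -> exists n, a n < t < b n) /\
      (forall n, sum_f_R0 (fun k => b k - a k) n <= eps).

Definition abs_cont (f : R -> R) : Prop :=
  forall eps : R, 0 < eps -> exists delta : R, 0 < delta /\
    forall (n : nat) (a b : nat -> R),
      (forall i, (i <= n)%nat -> a i <= b i) ->
      (forall i j, (i < j <= n)%nat -> b i <= a j) ->
      sum_f_R0 (fun i => b i - a i) n < delta ->
      sum_f_R0 (fun i => Rabs (f (b i) - f (a i))) n < eps.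

Definition horizontal_curve (f g h : R -> R) : Prop :=
  abs_cont f /\ abs_cont g /\ abs_cont h /\
  null_set (fun t => ~ (ex_derive f t /\ ex_derive g t /\ ex_derive h t /\
      Derive h t = 2 * (Derive f t * g t - f t * Derive g t))).

Definition C1 (f : R -> R) : Prop :=
  (forall x, ex_derive f x) /\
  (forall x, continuous (Derive f) x) /\
  (exists M, forall x, Rabs (Derive f x) <= M).

Definition C1_H (K : R -> Prop) (gamma : R -> Hpt) : Prop :=
  exists f g h : R -> R, C1 f /\ C1 g /\ C1 h /\ horizontal_curve f g h /\
    forall t, K t -> gamma t = (f t, g t, h t).

Definition continuous_on_K (K : R -> Prop) (gamma : R -> Hpt) : Prop :=
  forall a, K a -> forall eps, 0 < eps -> exists delta, 0 < delta /\
    forall b, K b -> Rabs (b - a) < delta -> enorm (hsub (gamma b) (gamma a)) < eps.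

(* Main.v *)
Require Import Defs.
From Stdlib Require Import Reals Rtopology Lra Lia Psatz Classical ClassicalEpsilon.
From Coquelicot Require Import Coquelicot.
Open Scope R_scope.
Definition pe1 (s : R) : R := (1)*s^1 + (-9/2)*s^2 + (6)*s^3 + (-5/2)*s^4.
Definition dpe1 (s : R) : R := (1) + (-9)*s^1 + (18)*s^2 + (-10)*s^3.
Definition Ipe1 (s : R) : R := (1/2)*s^2 + (-3/2)*s^3 + (3/2)*s^4 + (-1/2)*s^5.
Definition pe2 (s : R) : R := (3/2)*s^2 + (-4)*s^3 + (5/2)*s^4.
Definition dpe2 (s : R) : R := (3)*s^1 + (-12)*s^2 + (10)*s^3.
Definition Ipe2 (s : R) : R := (1/2)*s^3 + (-1)*s^4 + (1/2)*s^5.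
Definition pb1 (s : R) : R := (-6)*s^2 + (40)*s^3 + (-90)*s^4 + (84)*s^5 + (-28)*s^6.
Definition dpb1 (s : R) : R := (-12)*s^1 + (120)*s^2 + (-360)*s^3 + (420)*s^4 + (-168)*s^5.
Definition Ipb1 (s : R) : R := (-2)*s^3 + (10)*s^4 + (-18)*s^5 + (14)*s^6 + (-4)*s^7.
Definition pb2 (s : R) : R := (-1)*s^2 + (4)*s^3 + (-5)*s^4 + (2)*s^5.
Definition dpb2 (s : R) : R := (-2)*s^1 + (12)*s^2 + (-20)*s^3 + (10)*s^4.
Definition Ipb2 (s : R) : R := (-1/3)*s^3 + (1)*s^4 + (-1)*s^5 + (1/3)*s^6.
Definition we1e2 (s : R) : R := (-1/2)*s^3 + (2)*s^4 + (-33/10)*s^5 + (5/2)*s^6 + (-5/7)*s^7.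
Definition we1b2 (s : R) : R := (1/3)*s^3 + (-2)*s^4 + (27/5)*s^5 + (-8)*s^6 + (47/7)*s^7 + (-3)*s^8 + (5/9)*s^9.
Definition we2b2 (s : R) : R := (-2/5)*s^5 + (5/3)*s^6 + (-19/7)*s^7 + (2)*s^8 + (-5/9)*s^9.
Definition wb1e1 (s : R) : R := (-2)*s^3 + (20)*s^4 + (-414/5)*s^5 + (186)*s^6 + (-1714/7)*s^7 + (189)*s^8 + (-238/3)*s^9 + (14)*s^10.
Definition wb1e2 (s : R) : R := (36/5)*s^5 + (-40)*s^6 + (638/7)*s^7 + (-105)*s^8 + (182/3)*s^9 + (-14)*s^10.
Definition wb1b2 (s : R) : R := (-16/5)*s^5 + (20)*s^6 + (-376/7)*s^7 + (78)*s^8 + (-64)*s^9 + (28)*s^10 + (-56/11)*s^11.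

Ltac pder := intros; unfold pe1,dpe1,Ipe1,pe2,dpe2,Ipe2,pb1,dpb1,Ipb1,pb2,dpb2,Ipb2,
  we1e2,we1b2,we2b2,wb1e1,wb1e2,wb1b2; auto_derive; [auto| field].

Lemma d_pe1 s : is_derive pe1 s (dpe1 s). Proof. pder. Qed.
Lemma d_pe2 s : is_derive pe2 s (dpe2 s). Proof. pder. Qed.
Lemma d_pb1 s : is_derive pb1 s (dpb1 s). Proof. pder. Qed.
Lemma d_pb2 s : is_derive pb2 s (dpb2 s). Proof. pder. Qed.
Lemma d_Ipe1 s : is_derive Ipe1 s (pe1 s). Proof. pder. Qed.
Lemma d_Ipe2 s : is_derive Ipe2 s (pe2 s). Proof. pder. Qed.
Lemma d_Ipb1 s : is_derive Ipb1 s (pb1 s). Proof. pder. Qed.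
Lemma d_Ipb2 s : is_derive Ipb2 s (pb2 s). Proof. pder. Qed.
Lemma d_we1e2 s : is_derive we1e2 s (dpe1 s * pe2 s - pe1 s * dpe2 s). Proof. pder. Qed.
Lemma d_we1b2 s : is_derive we1b2 s (dpe1 s * pb2 s - pe1 s * dpb2 s). Proof. pder. Qed.
Lemma d_we2b2 s : is_derive we2b2 s (dpe2 s * pb2 s - pe2 s * dpb2 s). Proof. pder. Qed.
Lemma d_wb1e1 s : is_derive wb1e1 s (dpb1 s * pe1 s - pb1 s * dpe1 s). Proof. pder. Qed.
Lemma d_wb1e2 s : is_derive wb1e2 s (dpb1 s * pe2 s - pb1 s * dpe2 s). Proof. pder. Qed.
Lemma d_wb1b2 s : is_derive wb1b2 s (dpb1 s * pb2 s - pb1 s * dpb2 s). Proof. pder. Qed.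

Ltac pval := unfold pe1,dpe1,Ipe1,pe2,dpe2,Ipe2,pb1,dpb1,Ipb1,pb2,dpb2,Ipb2,
  we1e2,we1b2,we2b2,wb1e1,wb1e2,wb1b2; simpl; field.

Lemma pvals :
  pe1 0 = 0 /\ pe1 1 = 0 /\ pe2 0 = 0 /\ pe2 1 = 0 /\ pb1 0 = 0 /\ pb1 1 = 0 /\
  pb2 0 = 0 /\ pb2 1 = 0 /\
  dpe1 0 = 1 /\ dpe1 1 = 0 /\ dpe2 0 = 0 /\ dpe2 1 = 1 /\ dpb1 0 = 0 /\ dpb1 1 = 0 /\
  dpb2 0 = 0 /\ dpb2 1 = 0 /\
  Ipe1 0 = 0 /\ Ipe1 1 = 0 /\ Ipe2 0 = 0 /\ Ipe2 1 = 0 /\ Ipb1 0 = 0 /\ Ipb1 1 = 0 /\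
  Ipb2 0 = 0 /\ Ipb2 1 = 0 /\
  we1e2 0 = 0 /\ we1b2 0 = 0 /\ we2b2 0 = 0 /\ wb1e1 0 = 0 /\ wb1e2 0 = 0 /\ wb1b2 0 = 0 /\
  we1e2 1 = -1/70 /\ we1b2 1 = 1/315 /\ we2b2 1 = -1/315 /\ wb1e1 1 = 1/105 /\
  wb1e2 1 = 1/105 /\ wb1b2 1 = -2/385.
Proof. repeat split; pval. Qed.

Lemma pow_01 s k : 0 <= s <= 1 -> 0 <= s ^ k <= 1.
Proof.
  intros H. split. apply pow_le; lra.
  induction k; simpl. lra. nra.
Qed.

Ltac pbound := intros s Hs; 
  pose proof (pow_01 s 1 Hs); pose proof (pow_01 s 2 Hs); pose proof (pow_01 s 3 Hs);
  pose proof (pow_01 s 4 Hs); pose proof (pow_01 s 5 Hs);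
  unfold pe1,dpe1,pe2,dpe2,pb1,dpb1,pb2,dpb2; apply Rabs_le; split; lra.

Lemma bnd_dpe1 : forall s, 0 <= s <= 1 -> Rabs (dpe1 s) <= 1100. Proof. pbound. Qed.
Lemma bnd_dpe2 : forall s, 0 <= s <= 1 -> Rabs (dpe2 s) <= 1100. Proof. pbound. Qed.
Lemma bnd_dpb1 : forall s, 0 <= s <= 1 -> Rabs (dpb1 s) <= 1100. Proof. pbound. Qed.
Lemma bnd_dpb2 : forall s, 0 <= s <= 1 -> Rabs (dpb2 s) <= 1100. Proof. pbound. Qed.

Record gdat := GD { qA1 : R; qA2 : R; qB1 : R; qB2 : R; qZ : R }.

Definition Rsgn (x : R) : R := if Rle_dec 0 x then 1 else -1.
Definition kk : R := 4/385.
Definition gR0 q := -(1/35) * (qA1 q * qB2 q - qB1 q * qA2 q).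
Definition gD q := qZ q - gR0 q.
Definition gtau q := Rsgn (gD q).
Definition gsig q := - gtau q.
Definition gP q := 2 * gsig q * (qA1 q - qB1 q) / 315 + 2 * (qA2 q + qB2 q) / 105.
Definition glam q :=
  (- (gtau q * gP q) + sqrt ((gtau q * gP q) ^ 2 + 4 * kk * Rabs (gD q))) / (2 * kk).

Definition Y1 q s := qA1 q * pe1 s + qB1 q * pe2 s + glam q * pb1 s.
Definition Y2 q s := qA2 q * pe1 s + qB2 q * pe2 s + glam q * gsig q * pb2 s.
Definition dY1 q s := qA1 q * dpe1 s + qB1 q * dpe2 s + glam q * dpb1 s.
Definition dY2 q s := qA2 q * dpe1 s + qB2 q * dpe2 s + glam q * gsig q * dpb2 s.
Definition IY1 q s := qA1 q * Ipe1 s + qB1 q * Ipe2 s + glam q * Ipb1 s.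
Definition IY2 q s := qA2 q * Ipe1 s + qB2 q * Ipe2 s + glam q * gsig q * Ipb2 s.
Definition WW q s :=
  qA1 q * qB2 q * we1e2 s + qA1 q * (glam q * gsig q) * we1b2 s
  - qB1 q * qA2 q * we1e2 s + qB1 q * (glam q * gsig q) * we2b2 s
  + glam q * qA2 q * wb1e1 s + glam q * qB2 q * wb1e2 s
  + glam q * (glam q * gsig q) * wb1b2 s.

Definition FF q m1 s := s * m1 + Y1 q s.
Definition GG q m2 s := s * m2 + Y2 q s.
Definition QQ q m1 m2 s :=
  m1 * (2 * IY2 q s - s * Y2 q s) + m2 * (s * Y1 q s - 2 * IY1 q s) + WW q s.

Lemma Rsgn_cases x : (Rsgn x = 1 /\ Rsgn x * Rabs x = x) \/ (Rsgn x = -1 /\ Rsgn x * Rabs x = x).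
Proof.
  unfold Rsgn; destruct (Rle_dec 0 x).
  - left; rewrite Rabs_pos_eq; lra.
  - right; rewrite Rabs_left; lra.
Qed.

Lemma quad_sol k P E : 0 < k -> 0 <= E ->
  let l := (- P + sqrt (P ^ 2 + 4 * k * E)) / (2 * k) in k * l ^ 2 + P * l = E.
Proof.
  intros Hk HE l.
  assert (Hs : 0 <= P ^ 2 + 4 * k * E) by nra.
  pose proof (sqrt_sqrt _ Hs) as Hq.
  unfold l. field_simplify; [|lra].
  set (r := sqrt (P ^ 2 + 4 * k * E)) in *.
  replace (r ^ 2) with (r * r) by ring. rewrite Hq. field. lra.
Qed.

Lemma WW1 q : 2 * WW q 1 = qZ q.
Proof.
  destruct pvals as (_&_&_&_&_&_&_&_&_&_&_&_&_&_&_&_&_&_&_&_&_&_&_&_&_&_&_&_&_&_&h1&h2&h3&h4&h5&h6).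
  unfold WW. rewrite h1, h2, h3, h4, h5, h6.
  assert (Hk : 0 < kk) by (unfold kk; lra).
  pose proof (quad_sol kk (gtau q * gP q) (Rabs (gD q)) Hk (Rabs_pos _)) as Hq.
  fold (glam q) in Hq. simpl in Hq.
  unfold gsig. unfold gP in Hq. unfold gsig in Hq.
  destruct (Rsgn_cases (gD q)) as [[Ht Hd]|[Ht Hd]]; unfold gtau in *; rewrite Ht in *;
  unfold gD, gR0, kk in *; lra || nra.
Qed.

Ltac punf := unfold pe1,dpe1,Ipe1,pe2,dpe2,Ipe2,pb1,dpb1,Ipb1,pb2,dpb2,Ipb2,
  we1e2,we1b2,we2b2,wb1e1,wb1e2,wb1b2.

Lemma d_Y1 q s : is_derive (Y1 q) s (dY1 q s).
Proof. unfold Y1, dY1; punf; auto_derive; [auto|field]. Qed.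
Lemma d_Y2 q s : is_derive (Y2 q) s (dY2 q s).
Proof. unfold Y2, dY2; punf; auto_derive; [auto|field]. Qed.
Lemma d_FF q m1 s : is_derive (FF q m1) s (m1 + dY1 q s).
Proof. unfold FF, Y1, dY1; punf; auto_derive; [auto|field]. Qed.
Lemma d_GG q m2 s : is_derive (GG q m2) s (m2 + dY2 q s).
Proof. unfold GG, Y2, dY2; punf; auto_derive; [auto|field]. Qed.
Lemma d_QQ q m1 m2 s : is_derive (QQ q m1 m2) s
  ((m1 + dY1 q s) * GG q m2 s - FF q m1 s * (m2 + dY2 q s)).
Proof. unfold QQ, FF, GG, IY1, IY2, Y1, Y2, dY1, dY2, WW; punf; auto_derive; [auto|field]. Qed.

Lemma gap_vals q m1 m2 :
  FF q m1 0 = 0 /\ FF q m1 1 = m1 /\ GG q m2 0 = 0 /\ GG q m2 1 = m2 /\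
  dY1 q 0 = qA1 q /\ dY1 q 1 = qB1 q /\ dY2 q 0 = qA2 q /\ dY2 q 1 = qB2 q /\
  QQ q m1 m2 0 = 0 /\ 2 * QQ q m1 m2 1 = qZ q.
Proof.
  pose proof (WW1 q) as HW.
  destruct pvals as (a1&a2&a3&a4&a5&a6&a7&a8&a9&a10&a11&a12&a13&a14&a15&a16&a17&a18&a19&a20&a21&a22&a23&a24&a25&a26&a27&a28&a29&a30&_).
  unfold FF, GG, QQ, dY1, dY2, Y1, Y2, IY1, IY2.
  rewrite a1,a2,a3,a4,a5,a6,a7,a8,a9,a10,a11,a12,a13,a14,a15,a16,a17,a18,a19,a20,a21,a22,a23,a24.
  assert (WW q 0 = 0) by (unfold WW; rewrite a25,a26,a27,a28,a29,a30; ring).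
  repeat split; try ring; [rewrite H; ring | rewrite <- HW; ring].
Qed.

Lemma sqrt_sum_le a b : 0 <= a -> 0 <= b -> sqrt (a + b) <= sqrt a + sqrt b.
Proof.
  intros Ha Hb. apply Rsqr_incr_0_var.
  - unfold Rsqr. rewrite sqrt_sqrt by lra.
    pose proof (sqrt_pos a); pose proof (sqrt_pos b).
    replace ((sqrt a + sqrt b) * (sqrt a + sqrt b)) with
      (sqrt a * sqrt a + sqrt b * sqrt b + 2 * sqrt a * sqrt b) by ring.
    rewrite !sqrt_sqrt by lra. nra.
  - pose proof (sqrt_pos a); pose proof (sqrt_pos b); lra.
Qed.

Lemma glam_bound q :
  Rabs (glam q) <= (2 * Rabs (gP q) + sqrt (4 * kk * Rabs (gD q))) / (2 * kk).
Proof.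
  unfold glam.
  assert (Hk : 0 < kk) by (unfold kk; lra).
  assert (Ht : Rabs (gtau q) = 1).
  { unfold gtau, Rsgn; destruct (Rle_dec 0 (gD q)).
    rewrite Rabs_pos_eq; lra. rewrite Rabs_left; lra. }
  assert (HP : Rabs (gtau q * gP q) = Rabs (gP q)) by (rewrite Rabs_mult, Ht; ring).
  pose proof (sqrt_sum_le ((gtau q * gP q) ^ 2) (4 * kk * Rabs (gD q))) as Hs.
  assert (Hsq : sqrt ((gtau q * gP q) ^ 2) = Rabs (gP q)).
  { rewrite <- Rsqr_pow2, sqrt_Rsqr_abs. exact HP. }
  assert (0 <= (gtau q * gP q) ^ 2) by nra.
  assert (0 <= 4 * kk * Rabs (gD q)) by (pose proof (Rabs_pos (gD q)); nra).
  specialize (Hs H H0). rewrite Hsq in Hs.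
  pose proof (sqrt_pos ((gtau q * gP q) ^ 2 + 4 * kk * Rabs (gD q))).
  pose proof (sqrt_pos (4 * kk * Rabs (gD q))).
  pose proof (Rabs_pos (gP q)).
  assert (Hb : Rabs (- (gtau q * gP q)) = Rabs (gP q)) by (rewrite Rabs_Ropp; 
    rewrite Rabs_mult, Ht; ring).
  unfold Rdiv. rewrite Rabs_mult. rewrite (Rabs_pos_eq (/ (2*kk))) by (apply Rlt_le, Rinv_0_lt_compat; lra).
  apply Rmult_le_compat_r. apply Rlt_le, Rinv_0_lt_compat; lra.
  eapply Rle_trans. apply Rabs_triang. rewrite Hb.
  rewrite (Rabs_pos_eq (sqrt _)) by apply sqrt_pos. lra.
Qed.

Lemma lam_small : forall eps, 0 < eps -> exists eta, 0 < eta /\ eta <= eps /\ forall q,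
  Rabs (qA1 q) < eta -> Rabs (qA2 q) < eta -> Rabs (qB1 q) < eta -> Rabs (qB2 q) < eta ->
  Rabs (qZ q) < eta -> Rabs (glam q) < eps.
Proof.
  intros e He.
  assert (Hk : 0 < kk) by (unfold kk; lra).
  exists (Rmin 1 (Rmin e (Rmin (kk * e / 2) (kk * e * e / 8)))).
  assert (0 < kk * e) by nra. assert (0 < kk * e * e) by nra.
  set (eta := Rmin 1 (Rmin e (Rmin (kk * e / 2) (kk * e * e / 8)))).
  assert (E1 : eta <= 1) by apply Rmin_l.
  assert (E2 : eta <= e) by (eapply Rle_trans; [apply Rmin_r|apply Rmin_l]).
  assert (E3 : eta <= kk * e / 2) by (eapply Rle_trans; [apply Rmin_r|];
     eapply Rle_trans; [apply Rmin_r|apply Rmin_l]).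
  assert (E4 : eta <= kk * e * e / 8) by (eapply Rle_trans; [apply Rmin_r|];
     eapply Rle_trans; [apply Rmin_r|apply Rmin_r]).
  assert (E0 : 0 < eta).
  { unfold eta. repeat apply Rmin_pos; lra. }
  split; [exact E0|split; [exact E2|]].
  intros q h1 h2 h3 h4 h5.
  pose proof (glam_bound q) as Hb.
  assert (HP : Rabs (gP q) < kk * e / 2).
  { unfold gP.
    assert (Hs : Rabs (gsig q) = 1).
    { unfold gsig, gtau, Rsgn; destruct (Rle_dec 0 (gD q)).
      rewrite Rabs_left; lra. rewrite Rabs_pos_eq; lra. }
    eapply Rle_lt_trans. apply Rabs_triang.
    unfold Rdiv. rewrite !Rabs_mult, Hs.
    rewrite (Rabs_pos_eq 2) by lra.
    rewrite (Rabs_pos_eq (/315)) by lra. rewrite (Rabs_pos_eq (/105)) by lra.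
    pose proof (Rabs_triang (qA1 q) (- qB1 q)). rewrite Rabs_Ropp in H1.
    pose proof (Rabs_triang (qA2 q) (qB2 q)).
    unfold Rminus. lra. }
  assert (HD : Rabs (gD q) < kk * e * e / 4).
  { unfold gD, gR0. 
    assert (Rabs (qA1 q * qB2 q - qB1 q * qA2 q) <= 2 * eta).
    { unfold Rminus. eapply Rle_trans. apply Rabs_triang. rewrite Rabs_Ropp, !Rabs_mult.
      pose proof (Rabs_pos (qA1 q)); pose proof (Rabs_pos (qB2 q));
      pose proof (Rabs_pos (qB1 q)); pose proof (Rabs_pos (qA2 q)). nra. }
    set (X := qA1 q * qB2 q - qB1 q * qA2 q) in *.
    unfold Rminus. eapply Rle_lt_trans. apply Rabs_triang. rewrite Rabs_Ropp, Rabs_mult.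
    rewrite Rabs_Ropp, (Rabs_pos_eq (1/35)) by lra. lra. }
  assert (Hsq : sqrt (4 * kk * Rabs (gD q)) < kk * e).
  { rewrite <- (sqrt_pow2 (kk * e)) by lra. apply sqrt_lt_1_alt.
    pose proof (Rabs_pos (gD q)). split. nra. 
    assert (4 * kk * Rabs (gD q) < 4 * kk * (kk * e * e / 4)) by (apply Rmult_lt_compat_l; lra).
    nra. }
  eapply Rle_lt_trans. exact Hb.
  apply (Rmult_lt_reg_r (2 * kk)). lra. unfold Rdiv. rewrite Rmult_assoc, Rinv_l by lra. lra.
Qed.

Lemma dY_small : forall eps, 0 < eps -> exists eta, 0 < eta /\ forall q,
  Rabs (qA1 q) < eta -> Rabs (qA2 q) < eta -> Rabs (qB1 q) < eta -> Rabs (qB2 q) < eta ->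
  Rabs (qZ q) < eta -> forall s, 0 <= s <= 1 -> Rabs (dY1 q s) < eps /\ Rabs (dY2 q s) < eps.
Proof.
  intros e He.
  destruct (lam_small (e / 3300)) as [eta [E0 [E1 Hl]]]. lra.
  exists eta. split; auto. intros q h1 h2 h3 h4 h5 s Hs.
  specialize (Hl q h1 h2 h3 h4 h5).
  pose proof (bnd_dpe1 s Hs); pose proof (bnd_dpe2 s Hs);
  pose proof (bnd_dpb1 s Hs); pose proof (bnd_dpb2 s Hs).
  assert (Hs' : Rabs (gsig q) = 1).
  { unfold gsig, gtau, Rsgn; destruct (Rle_dec 0 (gD q)).
    rewrite Rabs_left; lra. rewrite Rabs_pos_eq; lra. }
  pose proof (Rabs_pos (dpe1 s)); pose proof (Rabs_pos (dpe2 s));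
  pose proof (Rabs_pos (dpb1 s)); pose proof (Rabs_pos (dpb2 s)).
  pose proof (Rabs_pos (qA1 q)); pose proof (Rabs_pos (qB1 q));
  pose proof (Rabs_pos (qA2 q)); pose proof (Rabs_pos (qB2 q)); pose proof (Rabs_pos (glam q)).
  split.
  - unfold dY1. eapply Rle_lt_trans. apply Rabs_triang. 
    eapply Rle_lt_trans. apply Rplus_le_compat_r. apply Rabs_triang.
    rewrite !Rabs_mult.
    assert (Rabs (qA1 q) * Rabs (dpe1 s) <= eta * 1100) by (apply Rmult_le_compat; lra).
    assert (Rabs (qB1 q) * Rabs (dpe2 s) <= eta * 1100) by (apply Rmult_le_compat; lra).
    assert (Rabs (glam q) * Rabs (dpb1 s) <= e/3300 * 1100) by (apply Rmult_le_compat; lra).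
    assert (Rabs (qA1 q) * Rabs (dpe1 s) + Rabs (qB1 q) * Rabs (dpe2 s) + Rabs (glam q) * Rabs (dpb1 s) <= (eta + eta + e/3300) * 1100) by lra.
    assert ((eta + eta + e/3300) * 1100 <= e) by lra.
    destruct (Req_dec (Rabs (qA1 q) * Rabs (dpe1 s) + Rabs (qB1 q) * Rabs (dpe2 s) + Rabs (glam q) * Rabs (dpb1 s)) e); [|lra].
    exfalso. 
    assert (Rabs (glam q) * Rabs (dpb1 s) < e/3300 * 1100 \/ Rabs (glam q) * Rabs (dpb1 s) <= e/3300*1100) by lra.
    assert (Rabs (qA1 q) * Rabs (dpe1 s) < eta * 1100 \/ Rabs (dpe1 s) = 0).
    { destruct (Req_dec (Rabs (dpe1 s)) 0); [right; auto|left]. nra. }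
    nra.
  - unfold dY2. eapply Rle_lt_trans. apply Rabs_triang. 
    eapply Rle_lt_trans. apply Rplus_le_compat_r. apply Rabs_triang.
    rewrite !Rabs_mult, Hs'.
    assert (Rabs (qA2 q) * Rabs (dpe1 s) <= eta * 1100) by (apply Rmult_le_compat; lra).
    assert (Rabs (qB2 q) * Rabs (dpe2 s) <= eta * 1100) by (apply Rmult_le_compat; lra).
    assert (Rabs (glam q) * 1 * Rabs (dpb2 s) <= e/3300 * 1100) by (rewrite Rmult_1_r; apply Rmult_le_compat; lra).
    assert (Rabs (glam q) * 1 * Rabs (dpb2 s) < e/3300 * 1100 \/ Rabs (dpb2 s) = 0).
    { destruct (Req_dec (Rabs (dpb2 s)) 0); [right; auto|left]. nra. }
    nra.
Qed.

Lemma cont_of_eps (f : R -> R) x :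
  (forall e, 0 < e -> exists d, 0 < d /\ forall t, Rabs (t - x) < d -> Rabs (f t - f x) < e) ->
  continuity_pt f x.
Proof.
  intros H e He. destruct (H e He) as [d [Hd Ht]]. exists d. split; auto.
  intros t [_ Hx]. apply Ht. exact Hx.
Qed.

Lemma eps_of_cont (f : R -> R) x : continuity_pt f x ->
  forall e, 0 < e -> exists d, 0 < d /\ forall t, Rabs (t - x) < d -> Rabs (f t - f x) < e.
Proof.
  intros H e He. destruct (H e He) as [d [Hd Ht]]. exists d. split; auto.
  intros t Htx. destruct (Req_dec t x). subst. rewrite Rminus_eq_0, Rabs_R0. auto.
  apply (Ht t). split; auto. split. exact I. auto.
Qed.

Lemma continuous_pt (f : R -> R) x : continuity_pt f x <-> continuous f x.
Proof. apply continuity_pt_filterlim. Qed.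

Definition REP (K : R -> Prop) (E D : R -> R) : Prop :=
  forall t, ~ K t -> exists c d (Psi DPsi : R -> R), c < t < d /\
    (forall s, c < s < d -> ~ K s) /\
    (forall s, c < s < d -> E s = Psi s /\ D s = DPsi s) /\
    (forall s, is_derive Psi s (DPsi s)) /\
    (forall s, continuity_pt DPsi s) /\
    (K c -> E c = Psi c /\ D c = DPsi c) /\
    (K d -> E d = Psi d /\ D d = DPsi d) /\
    ((exists k, K k /\ k < t) -> K c) /\
    ((exists k, K k /\ t < k) -> K d).

Lemma REP_notK K E D : REP K E D -> forall t, ~ K t ->
  is_derive E t (D t) /\ continuity_pt D t.
Proof.
  intros HR t Ht. destruct (HR t Ht) as (c&d&Psi&DPsi&Hcd&HK&HE&Hder&Hc&_).
  assert (Hloc : forall s, Rabs (s - t) < Rmin (t - c) (d - t) -> c < s < d).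
  { intros s Hs. pose proof (Rmin_l (t-c) (d-t)); pose proof (Rmin_r (t-c) (d-t)).
    apply Rabs_def2 in Hs. lra. }
  assert (Hpos : 0 < Rmin (t - c) (d - t)) by (apply Rmin_pos; lra).
  split.
  - destruct (HE t Hcd) as [_ ->].
    apply is_derive_ext_loc with Psi; [|apply Hder].
    exists (mkposreal _ Hpos). intros s Hs. symmetry. apply HE. apply Hloc. exact Hs.
  - apply cont_of_eps. intros e He.
    destruct (eps_of_cont _ _ (Hc t) e He) as [d0 [Hd0 H0]].
    exists (Rmin d0 (Rmin (t - c) (d - t))). split. apply Rmin_pos; lra.
    intros s Hs. 
    pose proof (Rmin_l d0 (Rmin (t - c) (d - t))); pose proof (Rmin_r d0 (Rmin (t - c) (d - t))).
    destruct (HE s (Hloc s ltac:(lra))) as [_ ->]. destruct (HE t Hcd) as [_ ->].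
    apply H0. lra.
Qed.

Lemma GLder K E D : REP K E D ->
  (forall a, K a -> forall e, 0 < e -> exists d, 0 < d /\ forall b, K b -> Rabs (b - a) < d ->
      Rabs (E b - E a - D a * (b - a)) <= e * Rabs (b - a)) ->
  (forall a, K a -> forall e, 0 < e -> exists d, 0 < d /\ forall t, Rabs (t - a) < d ->
      Rabs (D t - D a) <= e) ->
  forall t, is_derive E t (D t).
Proof.
  intros HR HdK HcK a.
  destruct (classic (K a)) as [Ka|Ka]; [|apply (REP_notK K E D HR a Ka)].
  assert (Main : forall e, 0 < e -> exists d, 0 < d /\ forall b, Rabs (b - a) < d ->
      Rabs (E b - E a - D a * (b - a)) <= e * Rabs (b - a)).
  { intros e He.
    destruct (HdK a Ka e He) as [d1 [Hd1 H1]].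
    destruct (HcK a Ka e He) as [d2 [Hd2 H2]].
    exists (Rmin d1 d2). split. apply Rmin_pos; lra.
    intros b Hb. pose proof (Rmin_l d1 d2); pose proof (Rmin_r d1 d2).
    destruct (classic (K b)) as [Kb|Kb]. apply H1; auto; lra.
    destruct (HR b Kb) as (c&d&Psi&DPsi&Hcd&HK&HE&Hder&Hc&HKc&HKd&Hc1&Hd1').
    destruct (Rlt_or_le a b) as [Hab|Hab].
    + assert (Kc : K c) by (apply Hc1; exists a; auto).
      assert (Hac : a <= c).
      { destruct (Rle_or_lt a c); auto. exfalso. apply (HK a); auto. lra. }
      destruct (HKc Kc) as [Ec Dc].
      destruct (HE b Hcd) as [Eb _].
      destruct (MVT_gen Psi c b DPsi) as [xi [Hxi Hmvt]].
      { intros x Hx. apply Hder. }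
      { intros x Hx. apply derivable_continuous_pt. 
        exists (DPsi x). apply is_derive_Reals. apply Hder. }
      rewrite Rmin_left in Hxi by lra. rewrite Rmax_right in Hxi by lra.
      assert (HDxi : D xi = DPsi xi).
      { destruct (Req_dec xi c). subst. auto. apply HE. lra. }
      assert (Hxa : Rabs (xi - a) < d2).
      { apply Rabs_def2 in Hb. apply Rabs_def1; lra. }
      specialize (H2 xi Hxa). rewrite HDxi in H2.
      assert (Hca : Rabs (c - a) < d1).
      { apply Rabs_def2 in Hb. apply Rabs_def1; lra. }
      destruct (Req_dec c a) as [Eca|Eca].
      * subst c. rewrite Eb, Ec, Hmvt. 
        replace (DPsi xi * (b - a) - D a * (b - a)) with ((DPsi xi - D a) * (b - a)) by ring.
        rewrite Rabs_mult. apply Rmult_le_compat_r. apply Rabs_pos. auto.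
      * specialize (H1 c Kc Hca).
        replace (E b - E a - D a * (b - a)) with
          ((Psi b - Psi c - D a * (b - c)) + (E c - E a - D a * (c - a))) by (rewrite Eb, Ec; ring).
        rewrite Hmvt.
        replace (DPsi xi * (b - c) - D a * (b - c)) with ((DPsi xi - D a) * (b - c)) by ring.
        eapply Rle_trans. apply Rabs_triang. rewrite Rabs_mult.
        rewrite (Rabs_pos_eq (b - c)) by lra. rewrite (Rabs_pos_eq (b - a)) by lra.
        rewrite (Rabs_pos_eq (c - a)) in H1 by lra.
        assert (Rabs (DPsi xi - D a) * (b - c) <= e * (b - c)) by (apply Rmult_le_compat_r; lra).
        lra.
    + assert (Hba : b < a) by (destruct (Req_dec b a); [subst; contradiction|lra]).
      assert (Kd : K d) by (apply Hd1'; exists a; auto).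
      assert (Hda : d <= a).
      { destruct (Rle_or_lt d a); auto. exfalso. apply (HK a); auto. lra. }
      destruct (HKd Kd) as [Ed Dd].
      destruct (HE b Hcd) as [Eb _].
      destruct (MVT_gen Psi b d DPsi) as [xi [Hxi Hmvt]].
      { intros x Hx. apply Hder. }
      { intros x Hx. apply derivable_continuous_pt. 
        exists (DPsi x). apply is_derive_Reals. apply Hder. }
      rewrite Rmin_left in Hxi by lra. rewrite Rmax_right in Hxi by lra.
      assert (HDxi : D xi = DPsi xi).
      { destruct (Req_dec xi d). subst. auto. apply HE. lra. }
      assert (Hxa : Rabs (xi - a) < d2).
      { apply Rabs_def2 in Hb. apply Rabs_def1; lra. }
      specialize (H2 xi Hxa). rewrite HDxi in H2.
      assert (Hca : Rabs (d - a) < d1).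
      { apply Rabs_def2 in Hb. apply Rabs_def1; lra. }
      destruct (Req_dec d a) as [Eca|Eca].
      * subst d. 
        replace (E b - E a - D a * (b - a)) with (- (Psi a - Psi b - D a * (a - b))) by (rewrite Eb, Ed; ring).
        rewrite Rabs_Ropp, Hmvt.
        replace (DPsi xi * (a - b) - D a * (a - b)) with ((DPsi xi - D a) * (a - b)) by ring.
        rewrite Rabs_mult. rewrite (Rabs_pos_eq (a - b)) by lra. 
        rewrite (Rabs_left (b - a)) by lra.
        replace (- (b - a)) with (a - b) by ring.
        apply Rmult_le_compat_r. lra. auto.
      * specialize (H1 d Kd Hca).
        replace (E b - E a - D a * (b - a)) with
          (- (Psi d - Psi b - D a * (d - b)) + (E d - E a - D a * (d - a))) by (rewrite Eb, Ed; ring).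
        rewrite Hmvt.
        replace (DPsi xi * (d - b) - D a * (d - b)) with ((DPsi xi - D a) * (d - b)) by ring.
        eapply Rle_trans. apply Rabs_triang. rewrite Rabs_Ropp, Rabs_mult.
        rewrite (Rabs_pos_eq (d - b)) by lra. rewrite (Rabs_left (b - a)) by lra.
        rewrite (Rabs_left (d - a)) in H1 by lra.
        assert (Rabs (DPsi xi - D a) * (d - b) <= e * (d - b)) by (apply Rmult_le_compat_r; lra).
        lra. }
  apply is_derive_Reals. intros e He.
  destruct (Main (e / 2)) as [d [Hd Hm]]. lra.
  exists (mkposreal d Hd). intros h Hh0 Hh. simpl in Hh.
  specialize (Hm (a + h)). replace (a + h - a) with h in Hm by ring.
  specialize (Hm Hh).
  assert (Hah : Rabs h > 0) by (apply Rabs_pos_lt; auto).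
  replace ((E (a + h) - E a) / h - D a) with ((E (a + h) - E a - D a * h) / h) by (field; auto).
  unfold Rdiv. rewrite Rabs_mult, Rabs_inv.
  apply (Rmult_lt_reg_r (Rabs h)). lra. rewrite Rmult_assoc, Rinv_l by lra. nra.
Qed.

Definition REPc (K : R -> Prop) (D : R -> R) : Prop :=
  forall t, ~ K t -> exists c d (DPsi : R -> R), c < t < d /\
    (forall s, c < s < d -> ~ K s) /\
    (forall s, c < s < d -> D s = DPsi s) /\
    (forall s, continuity_pt DPsi s) /\
    (K c -> D c = DPsi c) /\
    (K d -> D d = DPsi d) /\
    ((exists k, K k /\ k < t) -> K c) /\
    ((exists k, K k /\ t < k) -> K d).

Lemma REP_REPc K E D : REP K E D -> REPc K D.
Proof.
  intros HR t Ht. destruct (HR t Ht) as (c&d&Psi&DPsi&H1&H2&H3&H4&H5&H6&H7&H8&H9).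
  exists c, d, DPsi. split;[auto|split;[auto|split;[intros s Hs; apply (H3 s Hs)|split;[auto|split;[intros Kc; apply (H6 Kc)|split;[intros Kd; apply (H7 Kd)|split; auto]]]]]].
Qed.

Definition NB (K : R -> Prop) : Prop := forall t, ~ K t ->
  (exists k, K k /\ k < t) -> (exists k, K k /\ t < k) ->
  exists c d, K c /\ K d /\ c < t < d /\ forall s, c < s < d -> ~ K s.

Definition PdK (K : R -> Prop) (D : R -> R) : Prop :=
  forall a, K a -> forall e, 0 < e -> exists d, 0 < d /\ forall b, K b -> Rabs (b - a) < d ->
    Rabs (D b - D a) < e.

Definition SMALL (K : R -> Prop) (D : R -> R) : Prop :=
  forall e, 0 < e -> exists eta, 0 < eta /\ forall t c d, ~ K t -> K c -> K d -> c < t < d ->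
    d - c < eta -> (forall s, c < s < d -> ~ K s) -> Rabs (D t - D c) < e /\ Rabs (D t - D d) < e.

Lemma GLcont_right K D : NB K -> REPc K D -> PdK K D -> SMALL K D ->
  forall a, K a -> forall e, 0 < e -> exists del, 0 < del /\ forall t, a < t < a + del ->
    Rabs (D t - D a) < e.
Proof.
  intros HNB HR HP HS a Ka e He.
  destruct (HP a Ka (e/2)) as [d1 [Hd1 H1]]. lra.
  destruct (HS (e/2)) as [eta [Heta H2]]. lra.
  set (r := Rmin d1 eta).
  assert (Hr : 0 < r) by (apply Rmin_pos; lra).
  assert (Hr1 : r <= d1) by apply Rmin_l. assert (Hr2 : r <= eta) by apply Rmin_r.
  destruct (classic (exists k, K k /\ a < k < a + r)) as [[k [Kk Hk]]|Hno].
  - exists (k - a). split. lra. intros t Ht.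
    destruct (classic (K t)) as [Kt|Kt].
    + apply Rlt_trans with (e/2); [|lra]. apply H1; auto. apply Rabs_def1; lra.
    + assert (X1 : exists k, K k /\ k < t) by (exists a; split; auto; lra).
      assert (X2 : exists k', K k' /\ t < k') by (exists k; split; auto; lra).
      destruct (HNB t Kt X1 X2) as (c&d&Kc&Kd&Hcd&Hno).
      assert (a <= c) by (destruct (Rle_or_lt a c); auto; exfalso; apply (Hno a); auto; lra).
      assert (d <= k) by (destruct (Rle_or_lt d k); auto; exfalso; apply (Hno k); auto; lra).
      destruct (H2 t c d Kt Kc Kd Hcd ltac:(lra) Hno) as [Hc _].
      destruct (Req_dec c a). subst c. lra.
      assert (Rabs (D c - D a) < e/2) by (apply H1; auto; apply Rabs_def1; lra).
      replace (D t - D a) with ((D t - D c) + (D c - D a)) by ring.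
      eapply Rle_lt_trans. apply Rabs_triang. lra.
  - assert (Kt0 : ~ K (a + r/2)) by (intro; apply Hno; exists (a + r/2); split; auto; lra).
    destruct (HR _ Kt0) as (c&d&DPsi&Hcd&HnoK&HE&Hc&HKc&HKd&Hc1&Hd1').
    assert (Kc : K c) by (apply Hc1; exists a; split; auto; lra).
    assert (Ec : c = a).
    { destruct (Rle_or_lt c a). destruct (Rle_or_lt a c). lra.
      exfalso. apply (HnoK a); auto; lra.
      exfalso. apply Hno. exists c. split; auto. lra. }
    subst c. pose proof (HKc Kc) as Da.
    destruct (eps_of_cont _ _ (Hc a) e He) as [d3 [Hd3 H3]].
    exists (Rmin d3 (d - a)). split. apply Rmin_pos; lra.
    intros t Ht. pose proof (Rmin_l d3 (d - a)); pose proof (Rmin_r d3 (d - a)).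
    rewrite (HE t) by lra. rewrite Da. apply H3. apply Rabs_def1; lra.
Qed.

Lemma GLcont_left K D : NB K -> REPc K D -> PdK K D -> SMALL K D ->
  forall a, K a -> forall e, 0 < e -> exists del, 0 < del /\ forall t, a - del < t < a ->
    Rabs (D t - D a) < e.
Proof.
  intros HNB HR HP HS a Ka e He.
  destruct (HP a Ka (e/2)) as [d1 [Hd1 H1]]. lra.
  destruct (HS (e/2)) as [eta [Heta H2]]. lra.
  set (r := Rmin d1 eta).
  assert (Hr : 0 < r) by (apply Rmin_pos; lra).
  assert (Hr1 : r <= d1) by apply Rmin_l. assert (Hr2 : r <= eta) by apply Rmin_r.
  destruct (classic (exists k, K k /\ a - r < k < a)) as [[k [Kk Hk]]|Hno].
  - exists (a - k). split. lra. intros t Ht.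
    destruct (classic (K t)) as [Kt|Kt].
    + apply Rlt_trans with (e/2); [|lra]. apply H1; auto. apply Rabs_def1; lra.
    + assert (X1 : exists k', K k' /\ k' < t) by (exists k; split; auto; lra).
      assert (X2 : exists k', K k' /\ t < k') by (exists a; split; auto; lra).
      destruct (HNB t Kt X1 X2) as (c&d&Kc&Kd&Hcd&Hno).
      assert (d <= a) by (destruct (Rle_or_lt d a); auto; exfalso; apply (Hno a); auto; lra).
      assert (k <= c) by (destruct (Rle_or_lt k c); auto; exfalso; apply (Hno k); auto; lra).
      destruct (H2 t c d Kt Kc Kd Hcd ltac:(lra) Hno) as [_ Hd].
      destruct (Req_dec d a). subst d. lra.
      assert (Rabs (D d - D a) < e/2) by (apply H1; auto; apply Rabs_def1; lra).
      replace (D t - D a) with ((D t - D d) + (D d - D a)) by ring.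
      eapply Rle_lt_trans. apply Rabs_triang. lra.
  - assert (Kt0 : ~ K (a - r/2)) by (intro; apply Hno; exists (a - r/2); split; auto; lra).
    destruct (HR _ Kt0) as (c&d&DPsi&Hcd&HnoK&HE&Hc&HKc&HKd&Hc1&Hd1').
    assert (Kd : K d) by (apply Hd1'; exists a; split; auto; lra).
    assert (Ed : d = a).
    { destruct (Rle_or_lt d a). destruct (Rle_or_lt a d). lra.
      exfalso. apply Hno. exists d. split; auto. lra.
      exfalso. apply (HnoK a); auto; lra. }
    subst d. pose proof (HKd Kd) as Da.
    destruct (eps_of_cont _ _ (Hc a) e He) as [d3 [Hd3 H3]].
    exists (Rmin d3 (a - c)). split. apply Rmin_pos; lra.
    intros t Ht. pose proof (Rmin_l d3 (a - c)); pose proof (Rmin_r d3 (a - c)).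
    rewrite (HE t) by lra. rewrite Da. apply H3. apply Rabs_def1; lra.
Qed.

Lemma GLcont K D : NB K -> REPc K D -> PdK K D -> SMALL K D ->
  forall a, K a -> forall e, 0 < e -> exists del, 0 < del /\ forall t, Rabs (t - a) < del ->
    Rabs (D t - D a) < e.
Proof.
  intros HNB HR HP HS a Ka e He.
  destruct (GLcont_right K D HNB HR HP HS a Ka e He) as [d1 [Hd1 H1]].
  destruct (GLcont_left K D HNB HR HP HS a Ka e He) as [d2 [Hd2 H2]].
  destruct (HP a Ka e He) as [d3 [Hd3 H3]].
  exists (Rmin d1 (Rmin d2 d3)). split. repeat apply Rmin_pos; lra.
  intros t Ht. pose proof (Rmin_l d1 (Rmin d2 d3)). pose proof (Rmin_r d1 (Rmin d2 d3)).
  pose proof (Rmin_l d2 d3). pose proof (Rmin_r d2 d3).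
  apply Rabs_def2 in Ht.
  destruct (Rtotal_order t a) as [Hl|[He'|Hg]].
  - apply H2. lra.
  - subst. rewrite Rminus_eq_0, Rabs_R0. auto.
  - apply H1. lra.
Qed.

Lemma cont_all K D : REPc K D ->
  (forall a, K a -> forall e, 0 < e -> exists del, 0 < del /\ forall t, Rabs (t - a) < del ->
    Rabs (D t - D a) < e) -> forall t, continuity_pt D t.
Proof.
  intros HR HK t. destruct (classic (K t)) as [Kt|Kt].
  - apply cont_of_eps. apply HK; auto.
  - destruct (HR t Kt) as (c&d&DPsi&Hcd&HnoK&HE&Hc&_).
    apply cont_of_eps. intros e He.
    destruct (eps_of_cont _ _ (Hc t) e He) as [d3 [Hd3 H3]].
    exists (Rmin d3 (Rmin (t - c) (d - t))). split. repeat apply Rmin_pos; lra.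
    intros s Hs. pose proof (Rmin_l d3 (Rmin (t - c) (d - t))). pose proof (Rmin_r d3 (Rmin (t - c) (d - t))).
    pose proof (Rmin_l (t - c) (d - t)). pose proof (Rmin_r (t - c) (d - t)).
    apply Rabs_def2 in Hs as Hs'.
    rewrite (HE s) by lra. rewrite (HE t) by lra. apply H3. lra.
Qed.

Definition closedR (S : R -> Prop) : Prop :=
  forall x, ~ S x -> exists r, 0 < r /\ forall y, Rabs (y - x) < r -> ~ S y.

Lemma compact_closedR K : compact K -> closedR K.
Proof.
  intros HK x Hx. pose proof (compact_P2 K HK) as Hc.
  unfold closed_set, open_set, neighbourhood, included, disc, complementary in Hc.
  destruct (Hc x Hx) as [d Hd]. exists d. split. apply cond_pos. intros y Hy. apply Hd. exact Hy.
Qed.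

Lemma sup_in (S : R -> Prop) : closedR S -> (exists M, forall x, S x -> x <= M) ->
  (exists x, S x) -> exists m, S m /\ forall k, S k -> k <= m.
Proof.
  intros Hc Hb Hne.
  destruct (completeness S Hb Hne) as [m [Hub Hlub]].
  exists m. split; [|exact Hub].
  destruct (classic (S m)) as [H|H]; auto. exfalso.
  destruct (Hc m H) as [r [Hr Hr']].
  assert (Hub2 : is_upper_bound S (m - r/2)).
  { intros x Sx. destruct (Rle_or_lt x (m - r/2)); auto.
    exfalso. apply (Hr' x); auto. pose proof (Hub x Sx). apply Rabs_def1; lra. }
  pose proof (Hlub _ Hub2). lra.
Qed.

Lemma inf_in (S : R -> Prop) : closedR S -> (exists M, forall x, S x -> M <= x) ->
  (exists x, S x) -> exists m, S m /\ forall k, S k -> m <= k.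
Proof.
  intros Hc [M HM] [x0 Hx0].
  destruct (sup_in (fun x => S (- x))) as [m [Sm Hm]].
  - intros x Hx. destruct (Hc (- x) Hx) as [r [Hr Hr']]. exists r. split; auto.
    intros y Hy. apply Hr'. replace (- y - - x) with (- (y - x)) by ring. rewrite Rabs_Ropp. auto.
  - exists (- M). intros x Hx. pose proof (HM _ Hx). lra.
  - exists (- x0). rewrite Ropp_involutive. auto.
  - exists (- m). split; auto. intros k Hk. assert (S (- - k)) by (rewrite Ropp_involutive; auto).
    pose proof (Hm _ H). lra.
Qed.

Lemma compact_bnd K : compact K -> exists m M, forall x, K x -> m <= x <= M.
Proof. intros HK. destruct (compact_P1 K HK) as [m [M H]]. exists m, M. exact H. Qed.

Lemma lower_nb K : compact K -> forall t, (exists k, K k /\ k <= t) ->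
  exists c, K c /\ c <= t /\ forall k, K k -> k <= t -> k <= c.
Proof.
  intros HK t Hne. pose proof (compact_closedR K HK) as Hc.
  destruct (compact_bnd K HK) as [m [M Hb]].
  destruct (sup_in (fun k => K k /\ k <= t)) as [c [[Kc Hct] Hmax]].
  - intros x Hx. destruct (classic (K x)) as [Kx|Kx].
    + assert (t < x) by (destruct (Rle_or_lt x t); auto; exfalso; apply Hx; auto).
      exists (x - t). split. lra. intros y Hy [_ Hy']. apply Rabs_def2 in Hy. lra.
    + destruct (Hc x Kx) as [r [Hr Hr']]. exists r. split; auto. intros y Hy [Ky _].
      apply (Hr' y Hy Ky).
  - exists t. intros x [_ H]. auto.
  - auto.
  - exists c. split; [auto|split; [auto|]]. intros k Kk Hk. apply Hmax. auto.
Qed.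

Lemma upper_nb K : compact K -> forall t, (exists k, K k /\ t <= k) ->
  exists d, K d /\ t <= d /\ forall k, K k -> t <= k -> d <= k.
Proof.
  intros HK t Hne. pose proof (compact_closedR K HK) as Hc.
  destruct (inf_in (fun k => K k /\ t <= k)) as [c [[Kc Hct] Hmax]].
  - intros x Hx. destruct (classic (K x)) as [Kx|Kx].
    + assert (x < t) by (destruct (Rle_or_lt t x); auto; exfalso; apply Hx; auto).
      exists (t - x). split. lra. intros y Hy [_ Hy']. apply Rabs_def2 in Hy. lra.
    + destruct (Hc x Kx) as [r [Hr Hr']]. exists r. split; auto. intros y Hy [Ky _].
      apply (Hr' y Hy Ky).
  - exists t. intros x [_ H]. auto.
  - auto.
  - exists c. split; [auto|split; [auto|]]. intros k Kk Hk. apply Hmax. auto.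
Qed.

Lemma kmin_ex K : compact K -> (exists k, K k) -> exists m, K m /\ forall k, K k -> m <= k.
Proof.
  intros HK [k0 Hk0]. destruct (compact_bnd K HK) as [m [M Hb]].
  destruct (upper_nb K HK m) as [d [Kd [_ Hd]]]. exists k0. split; auto. apply Hb; auto.
  exists d. split; auto. intros k Kk. apply Hd; auto. apply Hb; auto.
Qed.

Lemma kmax_ex K : compact K -> (exists k, K k) -> exists m, K m /\ forall k, K k -> k <= m.
Proof.
  intros HK [k0 Hk0]. destruct (compact_bnd K HK) as [m [M Hb]].
  destruct (lower_nb K HK M) as [d [Kd [_ Hd]]]. exists k0. split; auto. apply Hb; auto.
  exists d. split; auto. intros k Kk. apply Hd; auto. apply Hb; auto.
Qed.

Lemma NB_of_compact K : compact K -> forall t, ~ K t ->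
  (exists k, K k /\ k < t) -> (exists k, K k /\ t < k) ->
  exists c d, K c /\ K d /\ c < t < d /\ forall s, c < s < d -> ~ K s.
Proof.
  intros HK t Kt [k1 [Kk1 H1]] [k2 [Kk2 H2]].
  destruct (lower_nb K HK t) as [c [Kc [Hct Hc]]]. exists k1; split; auto; lra.
  destruct (upper_nb K HK t) as [d [Kd [Htd Hd]]]. exists k2; split; auto; lra.
  exists c, d. split; auto. split; auto. split.
  - split. destruct (Req_dec c t). subst; contradiction. lra.
    destruct (Req_dec d t). subst; contradiction. lra.
  - intros s Hs Ks. destruct (Rle_or_lt s t).
    + pose proof (Hc s Ks H). lra.
    + pose proof (Hd s Ks ltac:(lra)). lra.
Qed.

Definition cL (K : R -> Prop) (t : R) : R :=
  epsilon (inhabits 0) (fun c => K c /\ c <= t /\ forall k, K k -> k <= t -> k <= c).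
Definition cR (K : R -> Prop) (t : R) : R :=
  epsilon (inhabits 0) (fun d => K d /\ t <= d /\ forall k, K k -> t <= k -> d <= k).
Definition kmin (K : R -> Prop) : R :=
  epsilon (inhabits 0) (fun m => K m /\ forall k, K k -> m <= k).
Definition kmax (K : R -> Prop) : R :=
  epsilon (inhabits 0) (fun m => K m /\ forall k, K k -> k <= m).

Lemma cL_spec K t : compact K -> (exists k, K k /\ k <= t) ->
  K (cL K t) /\ cL K t <= t /\ forall k, K k -> k <= t -> k <= cL K t.
Proof.
  intros HK H. unfold cL. apply epsilon_spec. apply lower_nb; auto.
Qed.
Lemma cR_spec K t : compact K -> (exists k, K k /\ t <= k) ->
  K (cR K t) /\ t <= cR K t /\ forall k, K k -> t <= k -> cR K t <= k.
Proof.
  intros HK H. unfold cR. apply epsilon_spec. apply upper_nb; auto.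
Qed.
Lemma kmin_spec K : compact K -> (exists k, K k) -> K (kmin K) /\ forall k, K k -> kmin K <= k.
Proof. intros HK H. unfold kmin. apply epsilon_spec. apply kmin_ex; auto. Qed.
Lemma kmax_spec K : compact K -> (exists k, K k) -> K (kmax K) /\ forall k, K k -> k <= kmax K.
Proof. intros HK H. unfold kmax. apply epsilon_spec. apply kmax_ex; auto. Qed.

Lemma gap_nb K c d s : compact K -> K c -> K d -> c < s < d -> (forall u, c < u < d -> ~ K u) ->
  cL K s = c /\ cR K s = d.
Proof.
  intros HK Kc Kd Hs Hno.
  destruct (cL_spec K s HK) as [K1 [H1 H1']]. exists c; split; auto; lra.
  destruct (cR_spec K s HK) as [K2 [H2 H2']]. exists d; split; auto; lra.
  assert (Hc1 : c <= cL K s) by (apply H1'; auto; lra).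
  assert (Hd1 : cR K s <= d) by (apply H2'; auto; lra).
  assert (Ks : ~ K s) by (apply Hno; auto).
  assert (cL K s <> s) by (intro E; rewrite E in K1; auto).
  assert (cR K s <> s) by (intro E; rewrite E in K2; auto).
  split.
  - destruct (Req_dec (cL K s) c); auto. exfalso. apply (Hno (cL K s)); auto. lra.
  - destruct (Req_dec (cR K s) d); auto. exfalso. apply (Hno (cR K s)); auto. lra.
Qed.

Lemma REP_build K E D (xK dK : R -> R) (linE linD : R -> R -> R) (gE gD : R -> R -> R -> R) :
  compact K -> (exists k, K k) ->
  (forall t, K t -> E t = xK t /\ D t = dK t) ->
  (forall t, ~ K t -> t < kmin K -> E t = linE (kmin K) t /\ D t = linD (kmin K) t) ->
  (forall t, ~ K t -> kmax K < t -> E t = linE (kmax K) t /\ D t = linD (kmax K) t) ->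
  (forall t, ~ K t -> kmin K <= t <= kmax K ->
      E t = gE (cL K t) (cR K t) t /\ D t = gD (cL K t) (cR K t) t) ->
  (forall a t, K a -> is_derive (linE a) t (linD a t)) ->
  (forall a t, K a -> continuity_pt (linD a) t) ->
  (forall a, K a -> linE a a = xK a /\ linD a a = dK a) ->
  (forall c d, K c -> K d -> c < d -> forall t,
      is_derive (gE c d) t (gD c d t) /\ continuity_pt (gD c d) t) ->
  (forall c d, K c -> K d -> c < d ->
      gE c d c = xK c /\ gE c d d = xK d /\ gD c d c = dK c /\ gD c d d = dK d) ->
  REP K E D.
Proof.
  intros HK Hne H1 H2 H3 H4 L1 L2 L3 G1 G2 t Kt.
  destruct (kmin_spec K HK Hne) as [Km Hm].
  destruct (kmax_spec K HK Hne) as [KM HM].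
  set (m := kmin K) in *. set (M := kmax K) in *.
  destruct (Rlt_or_le t m) as [Htm|Htm].
  - exists (t - 1), m, (linE m), (linD m).
    split. lra. split. intros s Hs Ks. pose proof (Hm s Ks). lra.
    split. intros s Hs. apply H2. intros Ks. pose proof (Hm s Ks). lra. lra.
    split. intros s; apply L1; auto. split. intros s; apply L2; auto.
    split. intros Kc. pose proof (Hm _ Kc). lra.
    split. intros _. destruct (H1 m Km) as [-> ->]. destruct (L3 m Km) as [-> ->]. auto.
    split. intros [k [Kk Hk]]. pose proof (Hm k Kk). lra.
    intros _. auto.
  - destruct (Rlt_or_le M t) as [HtM|HtM].
    + exists M, (t + 1), (linE M), (linD M).
      split. lra. split. intros s Hs Ks. pose proof (HM s Ks). lra.
      split. intros s Hs. apply H3. intros Ks. pose proof (HM s Ks). lra. lra.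
      split. intros s; apply L1; auto. split. intros s; apply L2; auto.
      split. intros _. destruct (H1 M KM) as [-> ->]. destruct (L3 M KM) as [-> ->]. auto.
      split. intros Kc. pose proof (HM _ Kc). lra.
      split. intros _. auto.
      intros [k [Kk Hk]]. pose proof (HM k Kk). lra.
    + destruct (cL_spec K t HK) as [Kc [Hct Hc]]. exists m; split; auto.
      destruct (cR_spec K t HK) as [Kd [Htd Hd]]. exists M; split; auto.
      set (c := cL K t) in *. set (d := cR K t) in *.
      assert (Hc' : c <> t) by (intro E'; rewrite E' in Kc; auto).
      assert (Hd' : d <> t) by (intro E'; rewrite E' in Kd; auto).
      assert (Hno : forall s, c < s < d -> ~ K s).
      { intros s Hs Ks. destruct (Rle_or_lt s t).
        + pose proof (Hc s Ks H). lra.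
        + pose proof (Hd s Ks ltac:(lra)). lra. }
      assert (Hcd : c < d) by lra.
      exists c, d, (gE c d), (gD c d).
      split. lra. split. auto.
      split. intros s Hs.
      { destruct (gap_nb K c d s HK Kc Kd Hs Hno) as [E1 E2].
        assert (Hs' : m <= s <= M) by (pose proof (Hm c Kc); pose proof (HM d Kd); lra).
        pose proof (H4 s (Hno s Hs) Hs') as H4'. rewrite E1, E2 in H4'. exact H4'. }
      split. intros s. apply (G1 c d Kc Kd Hcd).
      split. intros s. apply (G1 c d Kc Kd Hcd).
      destruct (G2 c d Kc Kd Hcd) as (e1&e2&e3&e4).
      split. intros _. rewrite e1, e3. apply H1; auto.
      split. intros _. rewrite e2, e4. apply H1; auto.
      split; intros _; auto.
Qed.

Definition x1 (gm : R -> Hpt) t := fst (fst (gm t)).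
Definition x2 (gm : R -> Hpt) t := snd (fst (gm t)).
Definition x3 (gm : R -> Hpt) t := snd (gm t).
Definition P1 (p : R -> R * R) t := fst (p t).
Definition P2 (p : R -> R * R) t := snd (p t).
Definition slope (x : R -> R) c d := (x d - x c) / (d - c).
Definition Zq gm c d :=
  / (d - c) * / (d - c) * (x3 gm d - x3 gm c + 2 * (x1 gm c * x2 gm d - x2 gm c * x1 gm d)).
Definition gq gm p c d :=
  GD (P1 p c - slope (x1 gm) c d) (P2 p c - slope (x2 gm) c d)
     (P1 p d - slope (x1 gm) c d) (P2 p d - slope (x2 gm) c d) (Zq gm c d).
Definition ss c d t := (t - c) / (d - c).

Definition gE1 gm p c d t := x1 gm c + (d - c) * FF (gq gm p c d) (slope (x1 gm) c d) (ss c d t).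
Definition gD1 gm p c d t := slope (x1 gm) c d + dY1 (gq gm p c d) (ss c d t).
Definition gE2 gm p c d t := x2 gm c + (d - c) * GG (gq gm p c d) (slope (x2 gm) c d) (ss c d t).
Definition gD2 gm p c d t := slope (x2 gm) c d + dY2 (gq gm p c d) (ss c d t).
Definition gE3 gm p c d t := x3 gm c
  + 2 * (d - c) * (x2 gm c * FF (gq gm p c d) (slope (x1 gm) c d) (ss c d t)
                   - x1 gm c * GG (gq gm p c d) (slope (x2 gm) c d) (ss c d t))
  + 2 * (d - c) ^ 2 * QQ (gq gm p c d) (slope (x1 gm) c d) (slope (x2 gm) c d) (ss c d t).
Definition gD3 gm p c d t :=
  2 * (gD1 gm p c d t * gE2 gm p c d t - gE1 gm p c d t * gD2 gm p c d t).

Definition lE1 gm p a t := x1 gm a + P1 p a * (t - a).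
Definition lD1 (gm : R -> Hpt) p a (t : R) := P1 p a.
Definition lE2 gm p a t := x2 gm a + P2 p a * (t - a).
Definition lD2 (gm : R -> Hpt) p a (t : R) := P2 p a.
Definition lE3 gm p a t := x3 gm a + 2 * (t - a) * (P1 p a * x2 gm a - x1 gm a * P2 p a).
Definition lD3 gm p a t := 2 * (lD1 gm p a t * lE2 gm p a t - lE1 gm p a t * lD2 gm p a t).

Definition ext (K : R -> Prop) (xK : R -> R) (lE : R -> R -> R) (gE : R -> R -> R -> R) t :=
  if excluded_middle_informative (K t) then xK t
  else if Rlt_dec t (kmin K) then lE (kmin K) t
  else if Rlt_dec (kmax K) t then lE (kmax K) t
  else gE (cL K t) (cR K t) t.

Lemma ext_K K xK lE gE t : K t -> ext K xK lE gE t = xK t.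
Proof. intros Kt. unfold ext. destruct (excluded_middle_informative (K t)); tauto. Qed.
Lemma ext_lo K xK lE gE t : ~ K t -> t < kmin K -> ext K xK lE gE t = lE (kmin K) t.
Proof. intros Kt H. unfold ext. destruct (excluded_middle_informative (K t)); try tauto.
  destruct (Rlt_dec t (kmin K)); tauto. Qed.
Lemma ext_hi K xK lE gE t : kmin K <= kmax K -> ~ K t -> kmax K < t -> ext K xK lE gE t = lE (kmax K) t.
Proof. intros Hm Kt H. unfold ext. destruct (excluded_middle_informative (K t)); try tauto.
  destruct (Rlt_dec t (kmin K)). lra. destruct (Rlt_dec (kmax K) t); tauto. Qed.
Lemma ext_gap K xK lE gE t : ~ K t -> kmin K <= t <= kmax K ->
  ext K xK lE gE t = gE (cL K t) (cR K t) t.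
Proof. intros Kt H. unfold ext. destruct (excluded_middle_informative (K t)); try tauto.
  destruct (Rlt_dec t (kmin K)). lra. destruct (Rlt_dec (kmax K) t). lra. auto. Qed.

Lemma d_ss c d t : c < d -> is_derive (ss c d) t (/ (d - c)).
Proof. intros H. unfold ss. auto_derive. auto. field. lra. Qed.

Lemma Der_FF q m s : Derive (fun x => FF q m x) s = m + dY1 q s.
Proof. apply is_derive_unique. apply d_FF. Qed.
Lemma Der_GG q m s : Derive (fun x => GG q m x) s = m + dY2 q s.
Proof. apply is_derive_unique. apply d_GG. Qed.
Lemma Der_QQ q m1 m2 s : Derive (fun x => QQ q m1 m2 x) s =
  (m1 + dY1 q s) * GG q m2 s - FF q m1 s * (m2 + dY2 q s).
Proof. apply is_derive_unique. apply d_QQ. Qed.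
Lemma Der_dY1 q s : Derive (fun x => dY1 q x) s = Derive (dY1 q) s.
Proof. reflexivity. Qed.

Ltac exd := match goal with
  | |- ex_derive (fun x => FF ?q ?m x) ?s => eexists; apply d_FF
  | |- ex_derive (fun x => GG ?q ?m x) ?s => eexists; apply d_GG
  | |- ex_derive (fun x => QQ ?q ?m1 ?m2 x) ?s => eexists; apply d_QQ
  end.

Lemma d_gE1 gm p c d t : c < d -> is_derive (gE1 gm p c d) t (gD1 gm p c d t).
Proof.
  intros H. unfold gE1, gD1, ss. auto_derive.
  - exd.
  - replace ((t + - c) * / (d - c)) with ((t - c) / (d - c)) by (unfold Rdiv; ring).
    rewrite Der_FF. field. lra.
Qed.

Lemma d_gE2 gm p c d t : c < d -> is_derive (gE2 gm p c d) t (gD2 gm p c d t).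
Proof.
  intros H. unfold gE2, gD2, ss. auto_derive.
  - exd.
  - replace ((t + - c) * / (d - c)) with ((t - c) / (d - c)) by (unfold Rdiv; ring).
    rewrite Der_GG. field. lra.
Qed.

Lemma d_gE3 gm p c d t : c < d -> is_derive (gE3 gm p c d) t (gD3 gm p c d t).
Proof.
  intros H. unfold gE3, gD3, gD1, gD2, gE1, gE2, ss. auto_derive.
  - repeat split; exd.
  - replace ((t + - c) * / (d - c)) with ((t - c) / (d - c)) by (unfold Rdiv; ring).
    rewrite Der_FF, Der_GG, Der_QQ. field. lra.
Qed.

Lemma ex_dY1 q s : ex_derive (fun x => dY1 q x) s.
Proof. unfold dY1, dpe1, dpe2, dpb1. auto_derive. auto. Qed.
Lemma ex_dY2 q s : ex_derive (fun x => dY2 q x) s.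
Proof. unfold dY2, dpe1, dpe2, dpb2. auto_derive. auto. Qed.

Lemma ex_gD1 gm p c d t : ex_derive (gD1 gm p c d) t.
Proof. unfold gD1, ss. auto_derive. apply ex_dY1. Qed.
Lemma ex_gD2 gm p c d t : ex_derive (gD2 gm p c d) t.
Proof. unfold gD2, ss. auto_derive. apply ex_dY2. Qed.

Lemma cont_of_exd f t : ex_derive f t -> continuity_pt f t.
Proof. intros H. apply continuous_pt. apply (ex_derive_continuous (K := R_AbsRing) (V := R_NormedModule)). auto. Qed.

Lemma ex_gD3 gm p c d t : c < d -> ex_derive (gD3 gm p c d) t.
Proof.
  intros H. unfold gD3. 
  assert (ex_derive (gD1 gm p c d) t) by apply ex_gD1.
  assert (ex_derive (gD2 gm p c d) t) by apply ex_gD2.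
  assert (ex_derive (gE1 gm p c d) t) by (eexists; apply d_gE1; auto).
  assert (ex_derive (gE2 gm p c d) t) by (eexists; apply d_gE2; auto).
  auto_derive. repeat split; auto.
Qed.

Lemma ss_c c d : c < d -> ss c d c = 0.
Proof. intros; unfold ss. field. lra. Qed.
Lemma ss_d c d : c < d -> ss c d d = 1.
Proof. intros; unfold ss. field. lra. Qed.

Lemma gvals gm p c d : c < d ->
  gE1 gm p c d c = x1 gm c /\ gE1 gm p c d d = x1 gm d /\
  gD1 gm p c d c = P1 p c /\ gD1 gm p c d d = P1 p d /\
  gE2 gm p c d c = x2 gm c /\ gE2 gm p c d d = x2 gm d /\
  gD2 gm p c d c = P2 p c /\ gD2 gm p c d d = P2 p d /\
  gE3 gm p c d c = x3 gm c /\ gE3 gm p c d d = x3 gm d.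
Proof.
  intros H.
  set (q := gq gm p c d). set (m1 := slope (x1 gm) c d). set (m2 := slope (x2 gm) c d).
  destruct (gap_vals q m1 m2) as (v1&v2&v3&v4&v5&v6&v7&v8&v9&v10).
  unfold gE1, gD1, gE2, gD2, gE3. fold q m1 m2. rewrite (ss_c c d H), (ss_d c d H).
  rewrite v1, v2, v3, v4, v5, v6, v7, v8, v9.
  assert (HZ : qZ q = Zq gm c d) by reflexivity. rewrite HZ in v10.
  assert (HQ : QQ q m1 m2 1 = Zq gm c d / 2) by lra. rewrite HQ.
  assert (H1 : qA1 q = P1 p c - m1) by reflexivity.
  assert (H2 : qA2 q = P2 p c - m2) by reflexivity.
  assert (H3 : qB1 q = P1 p d - m1) by reflexivity.
  assert (H4 : qB2 q = P2 p d - m2) by reflexivity.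
  rewrite H1, H2, H3, H4.
  unfold m1, m2, slope, Zq.
  repeat split; field; lra.
Qed.

Definition XE1 K gm p := ext K (x1 gm) (lE1 gm p) (gE1 gm p).
Definition XD1 K gm p := ext K (P1 p) (lD1 gm p) (gD1 gm p).
Definition XE2 K gm p := ext K (x2 gm) (lE2 gm p) (gE2 gm p).
Definition XD2 K gm p := ext K (P2 p) (lD2 gm p) (gD2 gm p).
Definition XE3 K gm p := ext K (x3 gm) (lE3 gm p) (gE3 gm p).
Definition XD3 K gm p t := 2 * (XD1 K gm p t * XE2 K gm p t - XE1 K gm p t * XD2 K gm p t).

Lemma kmin_le_kmax K : compact K -> (exists k, K k) -> kmin K <= kmax K.
Proof.
  intros HK Hne. destruct (kmin_spec K HK Hne) as [Km Hm].
  destruct (kmax_spec K HK Hne) as [KM HM]. apply HM; auto.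
Qed.

Lemma REP1 K gm p : compact K -> (exists k, K k) -> REP K (XE1 K gm p) (XD1 K gm p).
Proof.
  intros HK Hne. pose proof (kmin_le_kmax K HK Hne) as Hmm.
  apply (REP_build K _ _ (x1 gm) (P1 p) (lE1 gm p) (lD1 gm p) (gE1 gm p) (gD1 gm p) HK Hne).
  - intros t Kt. unfold XE1, XD1. rewrite !ext_K; auto.
  - intros t Kt H. unfold XE1, XD1. rewrite !ext_lo; auto.
  - intros t Kt H. unfold XE1, XD1. rewrite !ext_hi; auto.
  - intros t Kt H. unfold XE1, XD1. rewrite !ext_gap; auto.
  - intros a t _. unfold lE1, lD1. auto_derive. auto. ring.
  - intros a t _. unfold lD1. apply continuity_pt_const. intros u v. auto.
  - intros a _. unfold lE1, lD1. split; ring.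
  - intros c d Kc Kd Hcd t. split. apply d_gE1; auto. apply cont_of_exd, ex_gD1.
  - intros c d Kc Kd Hcd. destruct (gvals gm p c d Hcd) as (v1&v2&v3&v4&_). auto.
Qed.

Lemma REP2 K gm p : compact K -> (exists k, K k) -> REP K (XE2 K gm p) (XD2 K gm p).
Proof.
  intros HK Hne. pose proof (kmin_le_kmax K HK Hne) as Hmm.
  apply (REP_build K _ _ (x2 gm) (P2 p) (lE2 gm p) (lD2 gm p) (gE2 gm p) (gD2 gm p) HK Hne).
  - intros t Kt. unfold XE2, XD2. rewrite !ext_K; auto.
  - intros t Kt H. unfold XE2, XD2. rewrite !ext_lo; auto.
  - intros t Kt H. unfold XE2, XD2. rewrite !ext_hi; auto.
  - intros t Kt H. unfold XE2, XD2. rewrite !ext_gap; auto.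
  - intros a t _. unfold lE2, lD2. auto_derive. auto. ring.
  - intros a t _. unfold lD2. apply continuity_pt_const. intros u v. auto.
  - intros a _. unfold lE2, lD2. split; ring.
  - intros c d Kc Kd Hcd t. split. apply d_gE2; auto. apply cont_of_exd, ex_gD2.
  - intros c d Kc Kd Hcd. destruct (gvals gm p c d Hcd) as (_&_&_&_&v1&v2&v3&v4&_). auto.
Qed.

Lemma REP3 K gm p : compact K -> (exists k, K k) -> REP K (XE3 K gm p) (XD3 K gm p).
Proof.
  intros HK Hne. pose proof (kmin_le_kmax K HK Hne) as Hmm.
  apply (REP_build K _ _ (x3 gm) (fun t => 2 * (P1 p t * x2 gm t - x1 gm t * P2 p t))
    (lE3 gm p) (lD3 gm p) (gE3 gm p) (gD3 gm p) HK Hne).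
  - intros t Kt. unfold XE3, XD3, XD1, XD2, XE1, XE2. rewrite !ext_K; auto.
  - intros t Kt H. unfold XE3, XD3, XD1, XD2, XE1, XE2. rewrite !ext_lo; auto.
  - intros t Kt H. unfold XE3, XD3, XD1, XD2, XE1, XE2. rewrite !ext_hi; auto.
  - intros t Kt H. unfold XE3, XD3, XD1, XD2, XE1, XE2. rewrite !ext_gap; auto.
  - intros a t _. unfold lE3, lD3, lD1, lD2, lE1, lE2. auto_derive. auto. ring.
  - intros a t _. apply cont_of_exd. unfold lD3, lD1, lD2, lE1, lE2. auto_derive. auto.
  - intros a _. unfold lE3, lD3, lD1, lD2, lE1, lE2. split; ring.
  - intros c d Kc Kd Hcd t. split. apply d_gE3; auto. apply cont_of_exd, ex_gD3; auto.
  - intros c d Kc Kd Hcd. destruct (gvals gm p c d Hcd) as (v1&v2&v3&v4&v5&v6&v7&v8&v9&v10).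
    unfold gD3. rewrite v1, v2, v3, v4, v5, v6, v7, v8. auto.
Qed.

Definition UH (K : R -> Prop) gm p : Prop :=
  forall e, 0 < e -> exists del, 0 < del /\ forall a b, K a -> K b -> 0 < Rabs (b - a) < del ->
    Rabs (slope (x1 gm) a b - P1 p a) < e /\ Rabs (slope (x2 gm) a b - P2 p a) < e /\
    Rabs (Zq gm a b) < e.

Lemma slope_sym x a b : a <> b -> slope x a b = slope x b a.
Proof. intros H. unfold slope. field. split; intro; apply H; lra. Qed.

Lemma UH_P K gm p : UH K gm p -> forall a, K a -> forall e, 0 < e -> exists d, 0 < d /\
  forall b, K b -> Rabs (b - a) < d -> Rabs (P1 p b - P1 p a) < e /\ Rabs (P2 p b - P2 p a) < e.
Proof.
  intros HU a Ka e He. destruct (HU (e/2)) as [d [Hd H]]. lra.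
  exists d. split; auto. intros b Kb Hb.
  destruct (Req_dec b a). subst. rewrite !Rminus_eq_0, !Rabs_R0. split; auto.
  assert (0 < Rabs (b - a)) by (apply Rabs_pos_lt; lra).
  destruct (H a b Ka Kb ltac:(lra)) as [h1 [h2 _]].
  assert (0 < Rabs (a - b) < d) by (rewrite Rabs_minus_sym; lra).
  destruct (H b a Kb Ka H2) as [h3 [h4 _]].
  rewrite <- slope_sym in h3, h4 by auto.
  split.
  - replace (P1 p b - P1 p a) with ((slope (x1 gm) a b - P1 p a) - (slope (x1 gm) a b - P1 p b)) by ring.
    eapply Rle_lt_trans. apply Rabs_triang. rewrite Rabs_Ropp. lra.
  - replace (P2 p b - P2 p a) with ((slope (x2 gm) a b - P2 p a) - (slope (x2 gm) a b - P2 p b)) by ring.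
    eapply Rle_lt_trans. apply Rabs_triang. rewrite Rabs_Ropp. lra.
Qed.

Lemma PdK1 K gm p : UH K gm p -> PdK K (XD1 K gm p).
Proof.
  intros HU a Ka e He. destruct (UH_P K gm p HU a Ka e He) as [d [Hd H]].
  exists d. split; auto. intros b Kb Hb. unfold XD1. rewrite !ext_K; auto. apply H; auto.
Qed.
Lemma PdK2 K gm p : UH K gm p -> PdK K (XD2 K gm p).
Proof.
  intros HU a Ka e He. destruct (UH_P K gm p HU a Ka e He) as [d [Hd H]].
  exists d. split; auto. intros b Kb Hb. unfold XD2. rewrite !ext_K; auto. apply H; auto.
Qed.

Lemma diff_lin (x P : R -> R) a b e : Rabs ((x b - x a) / (b - a) - P a) < e -> b <> a ->
  Rabs (x b - x a - P a * (b - a)) <= e * Rabs (b - a).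
Proof.
  intros H Hab. replace (x b - x a - P a * (b - a)) with (((x b - x a) / (b - a) - P a) * (b - a))
    by (field; lra).
  rewrite Rabs_mult. apply Rmult_le_compat_r. apply Rabs_pos. lra.
Qed.

Lemma diffK1 K gm p : UH K gm p -> forall a, K a -> forall e, 0 < e -> exists d, 0 < d /\
  forall b, K b -> Rabs (b - a) < d ->
  Rabs (XE1 K gm p b - XE1 K gm p a - XD1 K gm p a * (b - a)) <= e * Rabs (b - a).
Proof.
  intros HU a Ka e He. destruct (HU e He) as [d [Hd H]]. exists d. split; auto.
  intros b Kb Hb. unfold XE1, XD1. rewrite !ext_K; auto.
  destruct (Req_dec b a). subst. match goal with |- Rabs ?X <= _ => replace X with 0 by ring end.
  rewrite Rminus_eq_0, !Rabs_R0. lra.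
  apply diff_lin; auto. apply (H a b Ka Kb). split; auto. apply Rabs_pos_lt. lra.
Qed.

Lemma diffK2 K gm p : UH K gm p -> forall a, K a -> forall e, 0 < e -> exists d, 0 < d /\
  forall b, K b -> Rabs (b - a) < d ->
  Rabs (XE2 K gm p b - XE2 K gm p a - XD2 K gm p a * (b - a)) <= e * Rabs (b - a).
Proof.
  intros HU a Ka e He. destruct (HU e He) as [d [Hd H]]. exists d. split; auto.
  intros b Kb Hb. unfold XE2, XD2. rewrite !ext_K; auto.
  destruct (Req_dec b a). subst. match goal with |- Rabs ?X <= _ => replace X with 0 by ring end.
  rewrite Rminus_eq_0, !Rabs_R0. lra.
  apply diff_lin; auto. apply (H a b Ka Kb). split; auto. apply Rabs_pos_lt. lra.
Qed.

Lemma diffK3 K gm p : UH K gm p -> forall a, K a -> forall e, 0 < e -> exists d, 0 < d /\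
  forall b, K b -> Rabs (b - a) < d ->
  Rabs (XE3 K gm p b - XE3 K gm p a - XD3 K gm p a * (b - a)) <= e * Rabs (b - a).
Proof.
  intros HU a Ka e He.
  set (C := 1 + 2 * Rabs (x1 gm a) + 2 * Rabs (x2 gm a)).
  assert (HC : 1 <= C) by (unfold C; pose proof (Rabs_pos (x1 gm a)); pose proof (Rabs_pos (x2 gm a)); lra).
  destruct (HU (e / C)) as [d [Hd H]]. apply Rdiv_lt_0_compat; lra.
  exists (Rmin d 1). split. apply Rmin_pos; lra.
  intros b Kb Hb. pose proof (Rmin_l d 1); pose proof (Rmin_r d 1).
  unfold XE3, XD3, XD1, XD2, XE1, XE2. rewrite !ext_K; auto.
  destruct (Req_dec b a). subst. match goal with |- Rabs ?X <= _ => replace X with 0 by ring end.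
  rewrite Rminus_eq_0, !Rabs_R0. lra.
  assert (Hba : 0 < Rabs (b - a)) by (apply Rabs_pos_lt; lra).
  destruct (H a b Ka Kb ltac:(lra)) as [h1 [h2 h3]].
  replace (x3 gm b - x3 gm a - 2 * (P1 p a * x2 gm a - x1 gm a * P2 p a) * (b - a)) with
    (Zq gm a b * (b - a) * (b - a) + 2 * x2 gm a * ((slope (x1 gm) a b - P1 p a) * (b - a))
     - 2 * x1 gm a * ((slope (x2 gm) a b - P2 p a) * (b - a)))
    by (unfold Zq, slope; field; lra).
  set (u := Zq gm a b) in *. set (v := slope (x1 gm) a b - P1 p a) in *.
  set (w := slope (x2 gm) a b - P2 p a) in *. set (r := b - a) in *.
  assert (Hr1 : Rabs r <= 1) by lra.
  eapply Rle_trans. apply Rabs_triang.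
  eapply Rle_trans. apply Rplus_le_compat_r. apply Rabs_triang.
  rewrite Rabs_Ropp, !Rabs_mult. rewrite (Rabs_pos_eq 2) by lra.
  assert (Rabs u * Rabs r * Rabs r <= e / C * Rabs r).
  { assert (Rabs u * Rabs r <= e / C * 1) by (apply Rmult_le_compat; [apply Rabs_pos|apply Rabs_pos|lra|lra]).
    apply Rmult_le_compat_r. apply Rabs_pos. lra. }
  assert (Rabs v * Rabs r <= e / C * Rabs r) by (apply Rmult_le_compat_r; [apply Rabs_pos|lra]).
  assert (Rabs w * Rabs r <= e / C * Rabs r) by (apply Rmult_le_compat_r; [apply Rabs_pos|lra]).
  assert (e / C * Rabs r * C = e * Rabs r) by (field; lra).
  pose proof (Rabs_pos (x1 gm a)); pose proof (Rabs_pos (x2 gm a)).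
  assert (2 * Rabs (x2 gm a) * (Rabs v * Rabs r) <= 2 * Rabs (x2 gm a) * (e / C * Rabs r)) 
    by (apply Rmult_le_compat_l; lra).
  assert (2 * Rabs (x1 gm a) * (Rabs w * Rabs r) <= 2 * Rabs (x1 gm a) * (e / C * Rabs r)) 
    by (apply Rmult_le_compat_l; lra).
  unfold C in *. nra.
Qed.

Lemma gap_D K gm p c d t : compact K -> K c -> K d -> c < t < d ->
  (forall s, c < s < d -> ~ K s) ->
  XD1 K gm p t = gD1 gm p c d t /\ XD2 K gm p t = gD2 gm p c d t /\
  XE1 K gm p t = gE1 gm p c d t /\ XE2 K gm p t = gE2 gm p c d t.
Proof.
  intros HK Kc Kd Ht Hno.
  assert (Hne : exists k, K k) by (exists c; auto).
  destruct (kmin_spec K HK Hne) as [_ Hm]. destruct (kmax_spec K HK Hne) as [_ HM].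
  pose proof (Hm c Kc). pose proof (HM d Kd).
  destruct (gap_nb K c d t HK Kc Kd Ht Hno) as [e1 e2].
  unfold XD1, XD2, XE1, XE2. rewrite !ext_gap; try (apply Hno; auto); try lra.
  rewrite e1, e2. auto.
Qed.

Lemma SMALL12 K gm p : compact K -> UH K gm p -> SMALL K (XD1 K gm p) /\ SMALL K (XD2 K gm p).
Proof.
  intros HK HU.
  assert (Main : forall e, 0 < e -> exists eta, 0 < eta /\ forall t c d, ~ K t -> K c -> K d ->
    c < t < d -> d - c < eta -> (forall s, c < s < d -> ~ K s) ->
    (Rabs (XD1 K gm p t - XD1 K gm p c) < e /\ Rabs (XD1 K gm p t - XD1 K gm p d) < e) /\
    (Rabs (XD2 K gm p t - XD2 K gm p c) < e /\ Rabs (XD2 K gm p t - XD2 K gm p d) < e)).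
  { intros e He.
    destruct (dY_small (e/2)) as [eta0 [Heta0 Hs]]. lra.
    destruct (HU (Rmin eta0 (e/2))) as [del [Hdel HU']]. apply Rmin_pos; lra.
    pose proof (Rmin_l eta0 (e/2)); pose proof (Rmin_r eta0 (e/2)).
    exists del. split; auto. intros t c d Kt Kc Kd Ht Hlen Hno.
    destruct (gap_D K gm p c d t HK Kc Kd Ht Hno) as (g1&g2&_).
    rewrite g1, g2. unfold XD1, XD2. rewrite !ext_K; auto.
    assert (0 < Rabs (d - c) < del) by (rewrite Rabs_pos_eq; lra).
    assert (0 < Rabs (c - d) < del) by (rewrite Rabs_minus_sym, Rabs_pos_eq; lra).
    destruct (HU' c d Kc Kd H1) as (h1&h2&h3).
    destruct (HU' d c Kd Kc H2) as (h4&h5&_).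
    rewrite <- slope_sym in h4, h5 by lra.
    set (q := gq gm p c d).
    assert (A1 : Rabs (qA1 q) < eta0) by (unfold q, gq; simpl; rewrite Rabs_minus_sym; lra).
    assert (A2 : Rabs (qA2 q) < eta0) by (unfold q, gq; simpl; rewrite Rabs_minus_sym; lra).
    assert (B1 : Rabs (qB1 q) < eta0) by (unfold q, gq; simpl; rewrite Rabs_minus_sym; lra).
    assert (B2 : Rabs (qB2 q) < eta0) by (unfold q, gq; simpl; rewrite Rabs_minus_sym; lra).
    assert (Z : Rabs (qZ q) < eta0) by (unfold q, gq; simpl; lra).
    assert (Hss : 0 <= ss c d t <= 1).
    { unfold ss, Rdiv. split. apply Rmult_le_pos; [lra| left; apply Rinv_0_lt_compat; lra].
      apply (Rmult_le_reg_r (d - c)); [lra|]. rewrite Rmult_assoc, Rinv_l by lra. lra. }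
    destruct (Hs q A1 A2 B1 B2 Z (ss c d t) Hss) as [s1 s2].
    unfold gD1, gD2. fold q.
    assert (a1 : qA1 q = P1 p c - slope (x1 gm) c d) by reflexivity.
    assert (a2 : qA2 q = P2 p c - slope (x2 gm) c d) by reflexivity.
    assert (b1 : qB1 q = P1 p d - slope (x1 gm) c d) by reflexivity.
    assert (b2 : qB2 q = P2 p d - slope (x2 gm) c d) by reflexivity.
    set (y1 := dY1 q (ss c d t)) in *. set (y2 := dY2 q (ss c d t)) in *.
    assert (forall A B C, Rabs A < e/2 -> Rabs (B - C) < e/2 -> Rabs (B + A - C) < e).
    { intros A B C HA HB. replace (B + A - C) with (A + (B - C)) by ring.
      eapply Rle_lt_trans. apply Rabs_triang. lra. }
    repeat split; apply H3; auto; lra. }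
  split; intros e He; destruct (Main e He) as [eta [Heta H]]; exists eta; split; auto;
    intros t c d h1 h2 h3 h4 h5 h6; apply (H t c d h1 h2 h3 h4 h5 h6).
Qed.

Lemma lip_of_der (E D : R -> R) B : (forall t, is_derive E t (D t)) -> (forall t, Rabs (D t) <= B) ->
  forall a b, Rabs (E b - E a) <= B * Rabs (b - a).
Proof.
  intros Hd HB a b.
  destruct (MVT_gen E a b D) as [c [_ Hc]].
  - intros x _. apply Hd.
  - intros x _. apply derivable_continuous_pt. exists (D x). apply is_derive_Reals. apply Hd.
  - rewrite Hc, Rabs_mult. apply Rmult_le_compat_r. apply Rabs_pos. apply HB.
Qed.

Lemma abs_cont_of E D B : (forall t, is_derive E t (D t)) -> (forall t, Rabs (D t) <= B) ->
  abs_cont E.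
Proof.
  intros Hd HB e He.
  assert (HB0 : 0 <= B) by (pose proof (HB 0); pose proof (Rabs_pos (D 0)); lra).
  exists (e / (B + 1)). split. apply Rdiv_lt_0_compat; lra.
  intros n a b Hab _ Hsum.
  apply Rle_lt_trans with (sum_f_R0 (fun i => (b i - a i) * B) n).
  - apply sum_Rle. intros i Hi. 
    pose proof (lip_of_der E D B Hd HB (a i) (b i)).
    rewrite (Rabs_pos_eq (b i - a i)) in H by (pose proof (Hab i Hi); lra). lra.
  - rewrite <- scal_sum.
    pose proof (cond_pos_sum (fun i => b i - a i) n).
    apply Rle_lt_trans with (B * (e / (B + 1))).
    + apply Rmult_le_compat_l; auto. lra.
    + apply (Rmult_lt_reg_r (B + 1)). lra. 
      replace (B * (e / (B + 1)) * (B + 1)) with (B * e) by (field; lra). nra.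
Qed.

Lemma bnd_of (D : R -> R) m M : m <= M -> (forall t, continuity_pt D t) ->
  (forall t, t < m -> D t = D m) -> (forall t, M < t -> D t = D M) ->
  exists B, forall t, Rabs (D t) <= B.
Proof.
  intros Hm Hc Hl Hr.
  destruct (continuity_ab_maj D m M Hm (fun c _ => Hc c)) as [x1 [H1 Hx1]].
  destruct (continuity_ab_min D m M Hm (fun c _ => Hc c)) as [x2 [H2 Hx2]].
  exists (Rmax (Rabs (D x1)) (Rabs (D x2))).
  assert (forall t, m <= t <= M -> Rabs (D t) <= Rmax (Rabs (D x1)) (Rabs (D x2))).
  { intros t Ht. pose proof (H1 t Ht); pose proof (H2 t Ht).
    pose proof (Rmax_l (Rabs (D x1)) (Rabs (D x2))); pose proof (Rmax_r (Rabs (D x1)) (Rabs (D x2))).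
    apply Rabs_le. pose proof (Rabs_le_between (D x1)); pose proof (Rabs_le_between (D x2)).
    pose proof (Rle_abs (D x1)). pose proof (Rle_abs (- D x2)). rewrite Rabs_Ropp in H8. lra. }
  intros t. destruct (Rlt_or_le t m). rewrite Hl; auto. apply H; lra.
  destruct (Rlt_or_le M t). rewrite Hr; auto. apply H; lra. apply H; lra.
Qed.

Lemma null_empty (N : R -> Prop) : (forall t, ~ N t) -> null_set N.
Proof.
  intros H e He. exists (fun _ => 0), (fun _ => 0). split. intros; lra.
  split. intros t Nt. exfalso. apply (H t Nt).
  intros n. rewrite sum_cte. lra.
Qed.

Lemma C1_of (E D : R -> R) B : (forall t, is_derive E t (D t)) -> (forall t, continuity_pt D t) ->
  (forall t, Rabs (D t) <= B) -> Defs.C1 E.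
Proof.
  intros Hd Hc HB. split; [|split].
  - intros x. exists (D x). apply Hd.
  - intros x. apply continuous_ext with D. intros y. symmetry. apply is_derive_unique. apply Hd.
    apply continuous_pt. apply Hc.
  - exists B. intros x. rewrite (is_derive_unique _ _ _ (Hd x)). apply HB.
Qed.

Lemma Dle_of_lt K D : (forall a, K a -> forall e, 0 < e -> exists del, 0 < del /\
  forall t, Rabs (t - a) < del -> Rabs (D t - D a) < e) ->
  forall a, K a -> forall e, 0 < e -> exists d, 0 < d /\ forall t, Rabs (t - a) < d ->
      Rabs (D t - D a) <= e.
Proof.
  intros H a Ka e He. destruct (H a Ka e He) as [d [Hd H']]. exists d. split; auto.
  intros t Ht. left. apply H'. auto.
Qed.

Lemma zero_C1_H K gm : (forall k, ~ K k) -> C1_H K gm.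
Proof.
  intros Hemp.
  assert (Hc : Defs.C1 (fun _ => 0)).
  { apply (C1_of _ (fun _ => 0) 0). intros t; auto_derive; auto. 
    intros t; apply continuity_pt_const; intros u v; auto. intros t. rewrite Rabs_R0. lra. }
  assert (Ha : abs_cont (fun _ : R => 0)).
  { apply (abs_cont_of _ (fun _ => 0) 0). intros t; auto_derive; auto. intros t. rewrite Rabs_R0. lra. }
  exists (fun _ => 0), (fun _ => 0), (fun _ => 0).
  split; auto. split; auto. split; auto. split.
  - split; auto. split; auto. split; auto. apply null_empty. intros t Ht. apply Ht.
    assert (Hd : forall t, is_derive (fun _ : R => 0) t 0) by (intros; auto_derive; auto).
    split. eexists; apply Hd. split. eexists; apply Hd. split. eexists; apply Hd.
    rewrite !(is_derive_unique _ _ _ (Hd t)). ring.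
  - intros t Kt. exfalso. apply (Hemp t Kt).
Qed.

Theorem conv K gm p : compact K -> UH K gm p -> C1_H K gm.
Proof.
  intros HK HU.
  destruct (classic (exists k, K k)) as [Hne|Hemp].
  2: { apply zero_C1_H. intros k Kk. apply Hemp. exists k. auto. }
  pose proof (NB_of_compact K HK) as HNB.
  pose proof (REP1 K gm p HK Hne) as R1.
  pose proof (REP2 K gm p HK Hne) as R2.
  pose proof (REP3 K gm p HK Hne) as R3.
  destruct (SMALL12 K gm p HK HU) as [S1 S2].
  pose proof (GLcont K _ HNB (REP_REPc _ _ _ R1) (PdK1 K gm p HU) S1) as C1K.
  pose proof (GLcont K _ HNB (REP_REPc _ _ _ R2) (PdK2 K gm p HU) S2) as C2K.
  pose proof (cont_all K _ (REP_REPc _ _ _ R1) C1K) as cD1.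
  pose proof (cont_all K _ (REP_REPc _ _ _ R2) C2K) as cD2.
  pose proof (GLder K _ _ R1 (diffK1 K gm p HU) (Dle_of_lt K _ C1K)) as d1.
  pose proof (GLder K _ _ R2 (diffK2 K gm p HU) (Dle_of_lt K _ C2K)) as d2.
  assert (cD3 : forall t, continuity_pt (XD3 K gm p) t).
  { intros t. apply continuous_pt. unfold XD3.
    change (continuous (fun y => mult 2 (minus (mult (XD1 K gm p y) (XE2 K gm p y))
       (mult (XE1 K gm p y) (XD2 K gm p y)))) t).
    apply (@continuous_mult R_UniformSpace R_AbsRing). apply continuous_const.
    apply (@continuous_minus R_UniformSpace R_AbsRing R_NormedModule);
      apply (@continuous_mult R_UniformSpace R_AbsRing).
    - apply continuous_pt, cD1.
    - apply (ex_derive_continuous (K := R_AbsRing) (V := R_NormedModule)). eexists; apply d2.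
    - apply (ex_derive_continuous (K := R_AbsRing) (V := R_NormedModule)). eexists; apply d1.
    - apply continuous_pt, cD2. }
  assert (d3 : forall t, is_derive (XE3 K gm p) t (XD3 K gm p t)).
  { apply (GLder K _ _ R3 (diffK3 K gm p HU)). intros a Ka e He.
    destruct (eps_of_cont _ _ (cD3 a) e He) as [d [Hd H]]. exists d. split; auto.
    intros t Ht. left. apply H. auto. }
  destruct (kmin_spec K HK Hne) as [Km Hm]. destruct (kmax_spec K HK Hne) as [KM HM].
  pose proof (kmin_le_kmax K HK Hne) as Hmm.
  assert (lo : forall t, t < kmin K -> ~ K t) by (intros t Ht Kt; pose proof (Hm t Kt); lra).
  assert (hi : forall t, kmax K < t -> ~ K t) by (intros t Ht Kt; pose proof (HM t Kt); lra).
  destruct (bnd_of (XD1 K gm p) (kmin K) (kmax K) Hmm cD1) as [B1 HB1].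
  { intros t Ht. unfold XD1. rewrite (ext_lo K _ _ _ t), (ext_K K _ _ _ (kmin K)); auto. }
  { intros t Ht. unfold XD1. rewrite (ext_hi K _ _ _ t), (ext_K K _ _ _ (kmax K)); auto. }
  destruct (bnd_of (XD2 K gm p) (kmin K) (kmax K) Hmm cD2) as [B2 HB2].
  { intros t Ht. unfold XD2. rewrite (ext_lo K _ _ _ t), (ext_K K _ _ _ (kmin K)); auto. }
  { intros t Ht. unfold XD2. rewrite (ext_hi K _ _ _ t), (ext_K K _ _ _ (kmax K)); auto. }
  destruct (bnd_of (XD3 K gm p) (kmin K) (kmax K) Hmm cD3) as [B3 HB3].
  { intros t Ht. unfold XD3, XD1, XD2, XE1, XE2. rewrite !(ext_lo K _ _ _ t), !(ext_K K _ _ _ (kmin K)); auto.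
    unfold lD1, lD2, lE1, lE2. ring. }
  { intros t Ht. unfold XD3, XD1, XD2, XE1, XE2. rewrite !(ext_hi K _ _ _ t), !(ext_K K _ _ _ (kmax K)); auto.
    unfold lD1, lD2, lE1, lE2. ring. }
  exists (XE1 K gm p), (XE2 K gm p), (XE3 K gm p).
  split. apply (C1_of _ _ B1 d1 cD1 HB1).
  split. apply (C1_of _ _ B2 d2 cD2 HB2).
  split. apply (C1_of _ _ B3 d3 cD3 HB3).
  split.
  - split. apply (abs_cont_of _ _ B1 d1 HB1).
    split. apply (abs_cont_of _ _ B2 d2 HB2).
    split. apply (abs_cont_of _ _ B3 d3 HB3).
    apply null_empty. intros t Ht. apply Ht.
    split. eexists; apply d1. split. eexists; apply d2. split. eexists; apply d3.
    rewrite (is_derive_unique _ _ _ (d1 t)), (is_derive_unique _ _ _ (d2 t)), 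
      (is_derive_unique _ _ _ (d3 t)). reflexivity.
  - intros t Kt. unfold XE1, XE2, XE3. rewrite !ext_K; auto.
    unfold x1, x2, x3. destruct (gm t) as [[u v] w]. reflexivity.
Qed.

Lemma sum_nonneg_mono (f : nat -> R) : (forall k, 0 <= f k) ->
  forall n N, (n <= N)%nat -> sum_f_R0 f n <= sum_f_R0 f N.
Proof.
  intros Hf n N H. induction H. lra. simpl. pose proof (Hf (S m)). lra.
Qed.

Lemma sum_nonneg_term (f : nat -> R) : (forall k, 0 <= f k) ->
  forall j N, (j <= N)%nat -> f j <= sum_f_R0 f N.
Proof.
  intros Hf j N H. destruct j.
  - apply Rle_trans with (sum_f_R0 f 0). simpl; lra. apply sum_nonneg_mono; [auto|lia].
  - apply Rle_trans with (sum_f_R0 f (S j)). simpl. 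
    pose proof (cond_pos_sum f j Hf). lra. apply sum_nonneg_mono; auto.
Qed.

Definition ell (a b : nat -> R) x k s := Rmax 0 (Rmin (b k) s - Rmax (a k) x).

Lemma ell_nonneg a b x k s : 0 <= ell a b x k s.
Proof. apply Rmax_l. Qed.

Lemma ell_mono a b x k s s' : s <= s' -> ell a b x k s <= ell a b x k s'.
Proof.
  intros H. unfold ell. apply Rle_max_compat_l.
  assert (Rmin (b k) s <= Rmin (b k) s').
  { unfold Rmin. destruct (Rle_dec (b k) s), (Rle_dec (b k) s'); lra. }
  lra.
Qed.

Lemma ell_le a b x k s : a k <= b k -> ell a b x k s <= b k - a k.
Proof.
  intros H. unfold ell. apply Rmax_lub. lra.
  pose proof (Rmin_l (b k) s). pose proof (Rmax_l (a k) x). lra.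
Qed.

Lemma cover_len (a b : nat -> R) x y : x <= y -> (forall n, a n <= b n) ->
  (forall t, x <= t <= y -> exists n, a n < t < b n) ->
  exists n, y - x <= sum_f_R0 (fun k => b k - a k) n.
Proof.
  intros Hxy Hab Hcov.
  set (S := fun s => x <= s <= y /\ exists n, s - x <= sum_f_R0 (fun k => ell a b x k s) n).
  assert (Step : forall s j s', S s -> a j < s < b j -> s < s' < b j -> s' <= y -> S s').
  { intros s j s' [Hs [n Hn]] Hj Hs' Hy.
    split. lra.
    exists (max n j).
    assert (E1 : ell a b x j s = s - Rmax (a j) x).
    { unfold ell. rewrite Rmin_right by lra. apply Rmax_right.
      pose proof (Rmax_Rle (a j) x s). unfold Rmax. destruct (Rle_dec (a j) x); lra. }
    assert (E2 : ell a b x j s' = s' - Rmax (a j) x).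
    { unfold ell. rewrite Rmin_right by lra. apply Rmax_right.
      unfold Rmax. destruct (Rle_dec (a j) x); lra. }
    assert (D : sum_f_R0 (fun k => ell a b x k s' - ell a b x k s) (max n j) >= s' - s).
    { pose proof (sum_nonneg_term (fun k => ell a b x k s' - ell a b x k s)) as T.
      assert (forall k, 0 <= ell a b x k s' - ell a b x k s).
      { intros k. pose proof (ell_mono a b x k s s'). lra. }
      specialize (T H j (max n j) ltac:(lia)). simpl in T. rewrite E1, E2 in T. lra. }
    rewrite minus_sum in D.
    pose proof (sum_nonneg_mono (fun k => ell a b x k s) (fun k => ell_nonneg a b x k s) n (max n j) ltac:(lia)).
    lra. }
  assert (Sx : S x).
  { split. lra. exists 0%nat. simpl. replace (x - x) with 0 by ring. apply ell_nonneg. }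
  destruct (completeness S) as [sg [Hub Hlub]].
  { exists y. intros s [Hs _]. lra. }
  { exists x. auto. }
  assert (Hsg : x <= sg <= y).
  { split. apply Hub. auto. apply Hlub. intros s [Hs _]. lra. }
  destruct (Hcov sg Hsg) as [j Hj].
  destruct (classic (exists s, S s /\ a j < s)) as [[s [Ss Hs]]|Hno].
  2: { exfalso. assert (is_upper_bound S (a j)).
       { intros s Ss. destruct (Rle_or_lt s (a j)); auto. exfalso. apply Hno. exists s; auto. }
       pose proof (Hlub _ H). lra. }
  assert (Hs2 : s <= sg) by (apply Hub; auto).
  assert (Sy : S y).
  { destruct (Req_dec s y). subst. auto.
    destruct (Rlt_or_le y (b j)) as [Hyb|Hyb].
    - apply (Step s j y Ss). lra. destruct Ss as [[_ ?] _]. lra. lra.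
    - exfalso. set (s' := (sg + b j) / 2).
      assert (S s') by (apply (Step s j s' Ss); unfold s'; lra).
      pose proof (Hub s' H0). unfold s' in H1. lra. }
  destruct Sy as [_ [n Hn]]. exists n.
  apply Rle_trans with (sum_f_R0 (fun k => ell a b x k y) n); auto.
  apply sum_Rle. intros k _. apply ell_le. auto.
Qed.

Lemma null_no_interval (N : R -> Prop) t0 r : null_set N -> 0 < r ->
  ~ (forall t, Rabs (t - t0) < r -> N t).
Proof.
  intros HN Hr Hall.
  destruct (HN (r/2)) as [a [b [Hab [Hc Hs]]]]. lra.
  destruct (cover_len a b (t0 - r/2) (t0 + r/2)) as [n Hn]. lra. auto.
  { intros t Ht. apply Hc. apply Hall. apply Rabs_def1; lra. }
  specialize (Hs n). lra.
Qed.

Lemma expr_eq (xa ya za xb yb zb p1 p2 r : R) :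
  hsub (hdil r (hmul (hinv (xa, ya, za)) (xb, yb, zb))) (horiz (p1, p2)) =
  (r * (- xa + xb) - p1, r * (- ya + yb) - p2,
   r * r * (- za + zb + 2 * (- ya * xb - - xa * yb)) - 0).
Proof. reflexivity. Qed.

Lemma enorm_small u v w e : Rabs u < e / 2 -> Rabs v < e / 2 -> Rabs w < e / 2 ->
  enorm (u, v, w) < e.
Proof.
  intros Hu Hv Hw. unfold enorm.
  assert (0 < e) by (pose proof (Rabs_pos u); lra).
  rewrite <- (sqrt_pow2 e) by lra. apply sqrt_lt_1_alt. split. nra.
  apply Rabs_def2 in Hu; apply Rabs_def2 in Hv; apply Rabs_def2 in Hw. nra.
Qed.

Lemma enorm_comps u v w : Rabs u <= enorm (u, v, w) /\ Rabs v <= enorm (u, v, w) /\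
  Rabs w <= enorm (u, v, w).
Proof.
  unfold enorm. repeat split; rewrite <- sqrt_Rsqr_abs; apply sqrt_le_1_alt; unfold Rsqr; nra.
Qed.

Lemma cont_Der f : Defs.C1 f -> forall t, continuity_pt (Derive f) t.
Proof. intros [_ [Hc _]] t. apply continuous_pt. apply Hc. Qed.

Lemma horiz_everywhere f g h : Defs.C1 f -> Defs.C1 g -> Defs.C1 h -> horizontal_curve f g h ->
  forall t, Derive h t = 2 * (Derive f t * g t - f t * Derive g t).
Proof.
  intros Cf Cg Ch [_ [_ [_ HN]]] t0.
  destruct (Req_dec (Derive h t0 - 2 * (Derive f t0 * g t0 - f t0 * Derive g t0)) 0) as [E|E]. lra.
  exfalso.
  set (phi := fun t => Derive h t - 2 * (Derive f t * g t - f t * Derive g t)).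
  assert (Hc : continuity_pt phi t0).
  { apply continuous_pt. unfold phi.
    destruct Cf as [df [cf _]]. destruct Cg as [dg [cg _]]. destruct Ch as [dh [ch _]].
    change (continuous (fun y => minus (Derive h y) (mult 2 (minus (mult (Derive f y) (g y))
       (mult (f y) (Derive g y))))) t0).
    apply (@continuous_minus R_UniformSpace R_AbsRing R_NormedModule). apply ch.
    apply (@continuous_mult R_UniformSpace R_AbsRing). apply continuous_const.
    apply (@continuous_minus R_UniformSpace R_AbsRing R_NormedModule);
      apply (@continuous_mult R_UniformSpace R_AbsRing); auto.
    apply (ex_derive_continuous (K := R_AbsRing) (V := R_NormedModule)). auto.
    apply (ex_derive_continuous (K := R_AbsRing) (V := R_NormedModule)). auto. }
  destruct (eps_of_cont phi t0 Hc (Rabs (phi t0))) as [r [Hr H]].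
  apply Rabs_pos_lt. exact E.
  apply (null_no_interval _ t0 r HN Hr).
  intros t Ht [_ [_ [_ Heq]]]. specialize (H t Ht). unfold phi in H.
  rewrite Heq in H. replace (2 * (Derive f t * g t - f t * Derive g t) -
    2 * (Derive f t * g t - f t * Derive g t)) with 0 in H by ring.
  fold (phi t0) in H. rewrite Rminus_0_l, Rabs_Ropp in H. lra.
Qed.

Lemma mvt_C1 f a b : Defs.C1 f -> exists xi, Rmin a b <= xi <= Rmax a b /\
  f b - f a = Derive f xi * (b - a).
Proof.
  intros [df _]. apply (MVT_gen f a b (Derive f)).
  - intros x _. apply Derive_correct. apply df.
  - intros x _. apply derivable_continuous_pt. exists (Derive f x).
    apply is_derive_Reals. apply Derive_correct. apply df.
Qed.

Lemma between_dist a b x : Rmin a b <= x <= Rmax a b -> Rabs (x - a) <= Rabs (b - a).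
Proof.
  intros H. unfold Rmin, Rmax in H. destruct (Rle_dec a b).
  - rewrite (Rabs_pos_eq (b - a)) by lra. rewrite Rabs_pos_eq by lra. lra.
  - rewrite (Rabs_left (b - a)) by lra. rewrite Rabs_left1 by lra. lra.
Qed.

Lemma between_in m M a b x : m <= a <= M -> m <= b <= M -> Rmin a b <= x <= Rmax a b -> m <= x <= M.
Proof. intros Ha Hb H. unfold Rmin, Rmax in H. destruct (Rle_dec a b); lra. Qed.

Theorem fwd K gm : compact K -> C1_H K gm ->
   exists p : R -> R * R,
     forall eps : R, 0 < eps -> exists delta : R, 0 < delta /\
       forall a b : R, K a -> K b -> 0 < Rabs (b - a) < delta ->
         enorm (hsub (hdil (/ (b - a)) (hmul (hinv (gm a)) (gm b)))
                     (horiz (p a))) < eps.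
Proof.
  intros HK (f&g&h&Cf&Cg&Ch&Hh&Hgm).
  pose proof (horiz_everywhere f g h Cf Cg Ch Hh) as Hhor.
  exists (fun a => (Derive f a, Derive g a)).
  intros e He.
  destruct (compact_bnd K HK) as [m [M Hb]].
  set (X := fun c => m <= c <= M).
  pose proof (Heine (Derive f) X (compact_P3 m M) (fun x _ => cont_Der f Cf x)) as Uf.
  pose proof (Heine (Derive g) X (compact_P3 m M) (fun x _ => cont_Der g Cg x)) as Ug.
  pose proof Cf as [dfx [_ [Bf HBf]]]. pose proof Cg as [dgx [_ [Bg HBg]]].
  pose proof Ch as [dhx _].
  assert (Bf0 : 0 <= Bf) by (pose proof (HBf 0); pose proof (Rabs_pos (Derive f 0)); lra).
  assert (Bg0 : 0 <= Bg) by (pose proof (HBg 0); pose proof (Rabs_pos (Derive g 0)); lra).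
  set (w := (e / 2) / (1 + 2 * (Bf + Bg))).
  assert (Hw : 0 < w) by (unfold w; apply Rdiv_lt_0_compat; lra).
  assert (Hw1 : w <= e / 2).
  { unfold w. apply (Rmult_le_reg_r (1 + 2 * (Bf + Bg))). lra.
    unfold Rdiv at 1. rewrite Rmult_assoc, Rinv_l by lra. nra. }
  assert (Hw2 : 2 * (Bf + Bg) * w < e / 2).
  { unfold w. apply (Rmult_lt_reg_r (1 + 2 * (Bf + Bg))). lra.
    replace (2 * (Bf + Bg) * (e / 2 / (1 + 2 * (Bf + Bg))) * (1 + 2 * (Bf + Bg))) with
      (2 * (Bf + Bg) * (e / 2)) by (field; lra). nra. }
  destruct (Uf (mkposreal w Hw)) as [df Hf]. destruct (Ug (mkposreal w Hw)) as [dg Hg].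
  simpl in Hf, Hg.
  exists (Rmin df dg). split. apply Rmin_pos; apply cond_pos.
  intros a b Ka Kb [Hab0 Hab].
  pose proof (Rmin_l df dg); pose proof (Rmin_r df dg).
  assert (Xa : X a) by (apply Hb; auto). assert (Xb : X b) by (apply Hb; auto).
  assert (Hba : b - a <> 0) by (intro E; rewrite E, Rabs_R0 in Hab0; lra).
  rewrite (Hgm a Ka), (Hgm b Kb), expr_eq. apply enorm_small.
  - destruct (mvt_C1 f a b Cf) as [xi [Hxi Hm]].
    replace (/ (b - a) * (- f a + f b) - Derive f a) with (Derive f xi - Derive f a)
      by (replace (- f a + f b) with (f b - f a) by ring; rewrite Hm; field; auto).
    apply Rlt_le_trans with w; [|auto]. apply Hf. apply (between_in m M a b); auto.
    auto. pose proof (between_dist a b xi Hxi). lra.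
  - destruct (mvt_C1 g a b Cg) as [xi [Hxi Hm]].
    replace (/ (b - a) * (- g a + g b) - Derive g a) with (Derive g xi - Derive g a)
      by (replace (- g a + g b) with (g b - g a) by ring; rewrite Hm; field; auto).
    apply Rlt_le_trans with w; [|auto]. apply Hg. apply (between_in m M a b); auto.
    auto. pose proof (between_dist a b xi Hxi). lra.
  - set (phi := fun t => h t - h a - 2 * g a * (f t - f a) + 2 * f a * (g t - g a)).
    set (dphi := fun t => 2 * (Derive f t * (g t - g a) - Derive g t * (f t - f a))).
    assert (Dphi : forall t, is_derive phi t (dphi t)).
    { intros t. unfold phi, dphi. auto_derive. repeat split; auto.
      change (Derive (fun x : R => h x) t) with (Derive h t). change (Derive (fun x : R => f x) t) with (Derive f t). change (Derive (fun x : R => g x) t) with (Derive g t). rewrite Hhor. ring. }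
    destruct (MVT_gen phi a b dphi) as [xi [Hxi Hm]].
    { intros x _. apply Dphi. }
    { intros x _. apply derivable_continuous_pt. exists (dphi x). apply is_derive_Reals. apply Dphi. }
    fold (Rmin a b) (Rmax a b) in Hxi.
    assert (Hpa : phi a = 0) by (unfold phi; ring).
    rewrite Hpa, Rminus_0_r in Hm.
    replace (/ (b - a) * / (b - a) * (- h a + h b + 2 * (- g a * f b - - f a * g b)) - 0)
      with (dphi xi / (b - a)).
    2: { assert (E : dphi xi = phi b / (b - a)) by (rewrite Hm; field; auto).
         rewrite E. unfold phi. field. auto. }
    pose proof (between_dist a b xi Hxi) as Dxi.
    assert (Xxi : X xi) by (apply (between_in m M a b); auto).
    destruct (mvt_C1 g a xi Cg) as [eta [Heta Hmg]].
    destruct (mvt_C1 f a xi Cf) as [zeta [Hzeta Hmf]].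
    pose proof (between_dist a xi eta Heta) as Deta.
    pose proof (between_dist a xi zeta Hzeta) as Dzeta.
    assert (Xeta : X eta) by (apply (between_in m M a xi); auto).
    assert (Xzeta : X zeta) by (apply (between_in m M a xi); auto).
    assert (Deta' : Rabs (eta - xi) <= Rabs (xi - a)).
    { rewrite (Rabs_minus_sym xi a). apply between_dist. rewrite Rmin_comm, Rmax_comm. auto. }
    assert (Dzeta' : Rabs (zeta - xi) <= Rabs (xi - a)).
    { rewrite (Rabs_minus_sym xi a). apply between_dist. rewrite Rmin_comm, Rmax_comm. auto. }
    assert (H1 : Rabs (Derive g eta - Derive g xi) < w) by (apply Hg; auto; lra).
    assert (H2 : Rabs (Derive f zeta - Derive f xi) < w) by (apply Hf; auto; lra).
    assert (Ed : dphi xi / (b - a) = 2 * ((xi - a) / (b - a)) *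
       (Derive f xi * (Derive g eta - Derive g xi) - Derive g xi * (Derive f zeta - Derive f xi))).
    { unfold dphi. rewrite Hmg, Hmf. field. auto. }
    rewrite Ed. rewrite !Rabs_mult. rewrite (Rabs_pos_eq 2) by lra.
    assert (Hr : Rabs ((xi - a) / (b - a)) <= 1).
    { unfold Rdiv. rewrite Rabs_mult, Rabs_inv.
      apply (Rmult_le_reg_r (Rabs (b - a))). lra. rewrite Rmult_assoc, Rinv_l by lra. lra. }
    assert (Hq : Rabs (Derive f xi * (Derive g eta - Derive g xi) -
       Derive g xi * (Derive f zeta - Derive f xi)) <= Bf * w + Bg * w).
    { unfold Rminus at 1. eapply Rle_trans. apply Rabs_triang. rewrite Rabs_Ropp, !Rabs_mult.
      pose proof (HBf xi); pose proof (HBg xi).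
      pose proof (Rabs_pos (Derive f xi)); pose proof (Rabs_pos (Derive g xi)).
      pose proof (Rabs_pos (Derive g eta - Derive g xi)); pose proof (Rabs_pos (Derive f zeta - Derive f xi)).
      assert (Rabs (Derive f xi) * Rabs (Derive g eta - Derive g xi) <= Bf * w) by (apply Rmult_le_compat; lra).
      assert (Rabs (Derive g xi) * Rabs (Derive f zeta - Derive f xi) <= Bg * w) by (apply Rmult_le_compat; lra).
      lra. }
    pose proof (Rabs_pos ((xi - a) / (b - a))).
    pose proof (Rabs_pos (Derive f xi * (Derive g eta - Derive g xi) -
       Derive g xi * (Derive f zeta - Derive f xi))).
    assert (Rabs ((xi - a) / (b - a)) * Rabs (Derive f xi * (Derive g eta - Derive g xi) -
       Derive g xi * (Derive f zeta - Derive f xi)) <= 1 * (Bf * w + Bg * w))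
      by (apply Rmult_le_compat; lra).
    nra.
Qed.

Lemma hyp_UH K gm p : (forall eps : R, 0 < eps -> exists delta : R, 0 < delta /\
       forall a b : R, K a -> K b -> 0 < Rabs (b - a) < delta ->
         enorm (hsub (hdil (/ (b - a)) (hmul (hinv (gm a)) (gm b)))
                     (horiz (p a))) < eps) -> UH K gm p.
Proof.
  intros H e He. destruct (H e He) as [d [Hd H']]. exists d. split; auto.
  intros a b Ka Kb Hab. specialize (H' a b Ka Kb Hab).
  assert (Hba : b - a <> 0) by (intro E; rewrite E, Rabs_R0 in Hab; lra).
  unfold slope, Zq, x1, x2, x3, P1, P2.
  destruct (gm a) as [[xa ya] za]. destruct (gm b) as [[xb yb] zb]. destruct (p a) as [p1 p2].
  rewrite expr_eq in H'. simpl.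
  destruct (enorm_comps (/ (b - a) * (- xa + xb) - p1) (/ (b - a) * (- ya + yb) - p2)
     (/ (b - a) * / (b - a) * (- za + zb + 2 * (- ya * xb - - xa * yb)) - 0)) as (c1&c2&c3).
  replace ((xb - xa) / (b - a) - p1) with (/ (b - a) * (- xa + xb) - p1) by (unfold Rdiv; ring).
  replace ((yb - ya) / (b - a) - p2) with (/ (b - a) * (- ya + yb) - p2) by (unfold Rdiv; ring).
  replace (/ (b - a) * / (b - a) * (zb - za + 2 * (xa * yb - ya * xb))) with
    (/ (b - a) * / (b - a) * (- za + zb + 2 * (- ya * xb - - xa * yb)) - 0) by ring.
  repeat split; lra.
Qed.

Theorem theorem1p4 (K : R -> Prop) (gamma : R -> Hpt) :
  compact K -> continuous_on_K K gamma ->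
  (C1_H K gamma <->
   exists p : R -> R * R,
     forall eps : R, 0 < eps -> exists delta : R, 0 < delta /\
       forall a b : R, K a -> K b -> 0 < Rabs (b - a) < delta ->
         enorm (hsub (hdil (/ (b - a)) (hmul (hinv (gamma a)) (gamma b)))
                     (horiz (p a))) < eps).
Proof.
  intros HK _. split.
  - apply fwd; auto.
  - intros [p Hp]. apply (conv K gamma p HK). apply hyp_UH. exact Hp.
Qed.
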